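(* (Binary case.) Let $({\bf x}_i,y_i)$, $i=1,\dots,n$, with ${\bf x}_i\in\mathbb{R}^p$, $y_i\in\{\pm1\}$, and parameters $\lambda_1\ge0$, $\lambda_2>0$, $\lambda_3>0$, $\delta>0$. Let $F(b,{\bf w})=f(b,{\bf w})+g(b,{\bf w})$ with $f(b,{\bf w})=\frac1n\sum_i\phi_H(y_i(b+{\bf x}_i^\top{\bf w}))$ and $g(b,{\bf w})=\lambda_1\|{\bf w}\|_1+\frac{\lambda_2}{2}\|{\bf w}\|^2+\frac{\lambda_3}{2}b^2$, and let $L_f=\frac{1}{n\delta}\sum_i y_i^2(1+\|{\bf x}_i\|^2)$. Let $\{{\bf u}^k=(b^k;{\bf w}^k)\}$ be generated by the B-PGH scheme: ${\bf u}^{-1}={\bf u}^0$, $L_0\le L_f$, $\eta>1$; at step $k$, $\hat{\bf u}^{k-1}={\bf u}^{k-1}+\omega_{k-1}({\bf u}^{k-1}-{\bf u}^{k-2})$ with $0\le\omega_{k-1}\le\sqrt{L_{k-1}/L_k}$; $L_k=\min(\eta^{n_k}L_{k-1},L_f)$ with $n_k$ the smallest nonnegative integer such that $f(\mathrm{prox}_{g/L_k}({\bf v}^{k-1}))\le f(\hat{\bf u}^{k-1})+\langle\nabla f(\hat{\bf u}^{k-1}),\mathrm{prox}_{g/L_k}({\bf v}^{k-1})-\hat{\bf u}^{k-1}\rangle+\frac{L_k}{2}\|\mathrm{prox}_{g/L_k}({\bf v}^{k-1})-\hat{\bf u}^{k-1}\|^2$, where ${\bf v}^{k-1}=\hat{\bf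 u}^{k-1}-\frac{1}{L_k}\nabla f(\hat{\bf u}^{k-1})$; then $b^k=\frac{L_k\hat b^{k-1}-\nabla_b f(\hat{\bf u}^{k-1})}{L_k+\lambda_3}$, ${\bf w}^k=\frac{1}{L_k+\lambda_2}\mathcal{S}_{\lambda_1}(L_k\hat{\bf w}^{k-1}-\nabla_{\bf w}f(\hat{\bf u}^{k-1}))$; and if $F({\bf u}^k)>F({\bf u}^{k-1})$, ${\bf u}^k$ is recomputed with $\hat{\bf u}^{k-1}={\bf u}^{k-1}$. Then $\{{\bf u}^k\}$ converges R-linearly to the unique minimizer of $F$. (Multi-class case.) Let $y_i\in\{1,\dots,J\}$, $\lambda_1\ge0$, $\lambda_2,\lambda_3>0$, $\delta>0$, let $\ell_M({\bf b},\mathbf{W})=\frac1n\sum_{i}\sum_j a_{ij}\phi_H(b_j+{\bf x}_i^\top{\bf w}_j)$, $G({\bf b},\mathbf{W})=\lambda_1\|\mathbf{W}\|_1+\frac{\lambda_2}{2}\|\mathbf{W}\|_F^2+\frac{\lambda_3}{2}\|{\bf b}\|^2$, $\mathcal{U}=\{({\bf b},\mathbf{W}):\mathbf{W}{\bf e}=\mathbf{0},{\bf e}^\top{\bf b}=0\}$, and let $\{\mathbf{U}^k\}$ be generated by the analogous scheme (M-PGH) for $\min_{\mathbf{U}\in\mathcal{U}}\ell_M+G$, i.e. the iteration of the binary case with $f,g,L_f$ replaced by $\ell_M,G,L_m=\frac{J}{n\delta}\sum_i(1+\|{\bf x}_i\|^2)$ and each proximal step taken as the exact minimizer over $\mathcal{U}$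 of $\langle\nabla\ell_M(\hat{\mathbf{U}}^{k-1}),\mathbf{U}-\hat{\mathbf{U}}^{k-1}\rangle+\frac{L_k}{2}\|\mathbf{U}-\hat{\mathbf{U}}^{k-1}\|^2+G(\mathbf{U})$, with $0\le\omega_{k-1}\le\sqrt{L_{k-1}/L_k}$. Then $\{\mathbf{U}^k\}$ converges R-linearly to the unique minimizer of $\ell_M+G$ over $\mathcal{U}$.
   Context: $\phi_H$ is the huberized hinge loss: $\phi_H(t)=0$ for $t>1$, $\frac{(1-t)^2}{2\delta}$ for $1-\delta<t\le1$, $1-t-\frac\delta2$ for $t\le1-\delta$. $\mathcal{S}_\nu(t)=\mathrm{sign}(t)\max(|t|-\nu,0)$ componentwise. $\mathrm{prox}_h({\bf v})=\arg\min_{\bf u}\frac12\|{\bf u}-{\bf v}\|^2+h({\bf u})$. In the multi-class case $a_{ij}=1$ if $y_i\ne j$ and $0$ otherwise, ${\bf w}_j$ is the $j$-th column of $\mathbf{W}\in\mathbb{R}^{p\times J}$, $\|\mathbf{W}\|_1=\sum_{i,j}|w_{ij}|$, ${\bf e}$ is the all-ones vector. R-linear convergence means $\|{\bf u}^k-{\bf u}^*\|\le C\tau^k$ for some $C>0$, $\tau\in(0,1)$. *)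

(* Defs.v *)
From Stdlib Require Import Reals Lra Lia.
Open Scope R_scope.

Fixpoint sumn (m : nat) (f : nat -> R) : R :=
  match m with O => 0 | S m' => sumn m' f + f m' end.

(* a vector of R^p is a function nat -> R of which only indices < p matter *)
Definition vec := nat -> R.
(* a p x J matrix: W l j, row l < p, column j < J *)
Definition mat := nat -> nat -> R.

Definition dot (p : nat) (a b : vec) : R := sumn p (fun j => a j * b j).
Definition norm1 (p : nat) (a : vec) : R := sumn p (fun j => Rabs (a j)).

Definition phiH (delta t : R) : R :=
  if Rlt_dec 1 t then 0
  else if Rlt_dec (1 - delta) t then (1 - t) ^ 2 / (2 * delta)
  else 1 - t - delta / 2.

Definition dphiH (delta t : R) : R :=
  if Rlt_dec 1 t then 0
  else if Rlt_dec (1 - delta) t then (t - 1) / delta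
  else -1.

Definition Rsgn (t : R) : R :=
  if Rlt_dec 0 t then 1 else if Rlt_dec t 0 then -1 else 0.
Definition soft (nu t : R) : R := Rsgn t * Rmax (Rabs t - nu) 0.

Definition descent {S : Type} (sub : S -> S -> S) (ip : S -> S -> R)
  (f : S -> R) (gradf : S -> S) (L : R) (h z : S) : Prop :=
  f z <= f h + ip (gradf h) (sub z h) + L / 2 * ip (sub z h) (sub z h).

(* prox L h z : z is the proximal point at step size 1/L from extrapolated point h *)
Definition ls_ok {S : Type} (sub : S -> S -> S) (ip : S -> S -> R)
  (f : S -> R) (gradf : S -> S) (prox : R -> S -> S -> Prop) (h : S) (L : R) : Prop :=
  forall z, prox L h z -> descent sub ip f gradf L h z.

Definition backtrack (eta Lmax Lprev : R) (ok : R -> Prop) (L : R) : Prop :=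
  exists nk : nat,
    L = Rmin (eta ^ nk * Lprev) Lmax /\ ok L /\
    forall m : nat, (m < nk)%nat -> ~ ok (Rmin (eta ^ m * Lprev) Lmax).

(* One step k (from u^{k-1} to u^k):
   uprev2 = u^{k-2}, uprev = u^{k-1}, Lprev = L_{k-1}, om = omega_{k-1},
   L = L_k, u = u^k.  Either the extrapolated step does not increase F,
   or it does and u^k is recomputed (line search included) with hat u = u^{k-1}. *)
Definition pgh_step {S : Type} (sub add : S -> S -> S) (scal : R -> S -> S)
  (ip : S -> S -> R) (f : S -> R) (gradf : S -> S) (Fobj : S -> R)
  (prox : R -> S -> S -> Prop) (eta Lmax : R)
  (Lprev : R) (uprev2 uprev : S) (om : R) (L : R) (u : S) : Prop :=
  let hx := add uprev (scal om (sub uprev uprev2)) in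
  (0 <= om /\ om <= sqrt (Lprev / L) /\
   backtrack eta Lmax Lprev (ls_ok sub ip f gradf prox hx) L /\
   prox L hx u /\ Fobj u <= Fobj uprev)
  \/
  (exists (L' : R) (z' : S),
     0 <= om /\ om <= sqrt (Lprev / L') /\
     backtrack eta Lmax Lprev (ls_ok sub ip f gradf prox hx) L' /\
     prox L' hx z' /\ Fobj uprev < Fobj z' /\
     backtrack eta Lmax Lprev (ls_ok sub ip f gradf prox uprev) L /\
     prox L uprev u).

Definition Rlinear_to_unique_min {S : Type} (sub : S -> S -> S) (ip : S -> S -> R)
  (Fobj : S -> R) (feas : S -> Prop) (u : nat -> S) : Prop :=
  exists us : S,
    feas us /\ (forall v, feas v -> Fobj us <= Fobj v) /\
    (forall v, feas v -> Fobj v <= Fobj us -> ip (sub v us) (sub v us) = 0) /\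
    exists C tau : R, 0 < C /\ 0 < tau < 1 /\
      forall k : nat, sqrt (ip (sub (u k) us) (sub (u k) us)) <= C * tau ^ k.

Definition bstate := (R * vec)%type.
Definition bsub (u v : bstate) : bstate := (fst u - fst v, fun j => snd u j - snd v j).
Definition badd (u v : bstate) : bstate := (fst u + fst v, fun j => snd u j + snd v j).
Definition bscal (a : R) (u : bstate) : bstate := (a * fst u, fun j => a * snd u j).
Definition bip (p : nat) (u v : bstate) : R := fst u * fst v + dot p (snd u) (snd v).

Definition f_bin (n p : nat) (delta : R) (x : nat -> vec) (y : nat -> R) (u : bstate) : R :=
  / INR n * sumn n (fun i => phiH delta (y i * (fst u + dot p (x i) (snd u)))).

Definition g_bin (p : nat) (lam1 lam2 lam3 : R) (u : bstate) : R :=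
  lam1 * norm1 p (snd u) + lam2 / 2 * dot p (snd u) (snd u) + lam3 / 2 * fst u ^ 2.

Definition F_bin n p delta x y lam1 lam2 lam3 (u : bstate) : R :=
  f_bin n p delta x y u + g_bin p lam1 lam2 lam3 u.

Definition grad_bin (n p : nat) (delta : R) (x : nat -> vec) (y : nat -> R) (u : bstate) : bstate :=
  (/ INR n * sumn n (fun i => dphiH delta (y i * (fst u + dot p (x i) (snd u))) * y i),
   fun j => / INR n * sumn n (fun i =>
              dphiH delta (y i * (fst u + dot p (x i) (snd u))) * y i * x i j)).

Definition Lf_bin (n p : nat) (delta : R) (x : nat -> vec) (y : nat -> R) : R :=
  / (INR n * delta) * sumn n (fun i => y i ^ 2 * (1 + dot p (x i) (x i))).

(* closed-form proximal step prox_{g/L}(h - grad f(h)/L) *)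
Definition prox_bin (n p : nat) (delta : R) (x : nat -> vec) (y : nat -> R)
  (lam1 lam2 lam3 : R) (L : R) (h z : bstate) : Prop :=
  let gr := grad_bin n p delta x y h in
  z = ((L * fst h - fst gr) / (L + lam3),
       fun j => / (L + lam2) * soft lam1 (L * snd h j - snd gr j)).

Definition mstate := (vec * mat)%type.
Definition msub (u v : mstate) : mstate :=
  (fun j => fst u j - fst v j, fun l j => snd u l j - snd v l j).
Definition madd (u v : mstate) : mstate :=
  (fun j => fst u j + fst v j, fun l j => snd u l j + snd v l j).
Definition mscal (a : R) (u : mstate) : mstate :=
  (fun j => a * fst u j, fun l j => a * snd u l j).
Definition mip (p J : nat) (u v : mstate) : R :=
  dot J (fst u) (fst v) + sumn p (fun l => sumn J (fun j => snd u l j * snd v l j)).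

(* labels y i in {0,...,J-1}; a_ij = 1 if y_i <> j, 0 otherwise *)
Definition aij (y : nat -> nat) (i j : nat) : R := if Nat.eqb (y i) j then 0 else 1.

Definition mscore (p : nat) (x : nat -> vec) (u : mstate) (i j : nat) : R :=
  fst u j + sumn p (fun l => x i l * snd u l j).

Definition ellM (n p J : nat) (delta : R) (x : nat -> vec) (y : nat -> nat) (u : mstate) : R :=
  / INR n * sumn n (fun i => sumn J (fun j => aij y i j * phiH delta (mscore p x u i j))).

Definition GM (p J : nat) (lam1 lam2 lam3 : R) (u : mstate) : R :=
  lam1 * sumn p (fun l => sumn J (fun j => Rabs (snd u l j)))
  + lam2 / 2 * sumn p (fun l => sumn J (fun j => snd u l j ^ 2))
  + lam3 / 2 * dot J (fst u) (fst u).

Definition FM n p J delta x y lam1 lam2 lam3 (u : mstate) : R :=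
  ellM n p J delta x y u + GM p J lam1 lam2 lam3 u.

Definition grad_M (n p J : nat) (delta : R) (x : nat -> vec) (y : nat -> nat) (u : mstate) : mstate :=
  (fun j => / INR n * sumn n (fun i => aij y i j * dphiH delta (mscore p x u i j)),
   fun l j => / INR n * sumn n (fun i => aij y i j * dphiH delta (mscore p x u i j) * x i l)).

Definition Lm (n p J : nat) (delta : R) (x : nat -> vec) : R :=
  INR J / (INR n * delta) * sumn n (fun i => 1 + dot p (x i) (x i)).

Definition inU (p J : nat) (u : mstate) : Prop :=
  (forall l, (l < p)%nat -> sumn J (fun j => snd u l j) = 0) /\ sumn J (fst u) = 0.

Definition prox_M (n p J : nat) (delta : R) (x : nat -> vec) (y : nat -> nat)
  (lam1 lam2 lam3 : R) (L : R) (h z : mstate) : Prop :=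
  let Q := fun V => mip p J (grad_M n p J delta x y h) (msub V h)
                    + L / 2 * mip p J (msub V h) (msub V h) + GM p J lam1 lam2 lam3 V in
  inU p J z /\ forall V, inU p J V -> Q z <= Q V.

(* Main.v *)
Require Import Defs.
From Stdlib Require Import Reals Lra Lia Psatz.
Open Scope R_scope.


Lemma sumn_ext m f g : (forall j, (j < m)%nat -> f j = g j) -> sumn m f = sumn m g.
Proof. induction m; simpl; intros H; auto. rewrite IHm by (intros; apply H; lia). rewrite H by lia. reflexivity. Qed.
Lemma sumn_add m f g : sumn m (fun j => f j + g j) = sumn m f + sumn m g.
Proof. induction m; simpl; [lra|]. rewrite IHm. lra. Qed.
Lemma sumn_sub m f g : sumn m (fun j => f j - g j) = sumn m f - sumn m g.
Proof. induction m; simpl; [lra|]. rewrite IHm. lra. Qed.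
Lemma sumn_scal m c f : sumn m (fun j => c * f j) = c * sumn m f.
Proof. induction m; simpl; [lra|]. rewrite IHm. lra. Qed.
Lemma sumn_le m f g : (forall j, (j < m)%nat -> f j <= g j) -> sumn m f <= sumn m g.
Proof. induction m; simpl; intros H; [lra|]. pose proof (H m ltac:(lia)). assert (sumn m f <= sumn m g) by (apply IHm; intros; apply H; lia). lra. Qed.
Lemma sumn_nonneg m f : (forall j, (j < m)%nat -> 0 <= f j) -> 0 <= sumn m f.
Proof. intros H. replace 0 with (sumn m (fun _ => 0)). apply sumn_le; auto.
  induction m; simpl; auto. rewrite IHm; [lra|]. intros; apply H; lia. Qed.
Lemma sumn_const m c : sumn m (fun _ => c) = INR m * c.
Proof. induction m; simpl sumn; [simpl; lra|]. rewrite IHm, S_INR. lra. Qed.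
Lemma sumn_swap m q (F : nat -> nat -> R) :
  sumn m (fun i => sumn q (fun j => F i j)) = sumn q (fun j => sumn m (fun i => F i j)).
Proof. induction m; simpl. { induction q; simpl; [auto| rewrite <- IHq; lra]. }
  rewrite IHm. rewrite <- sumn_add. reflexivity. Qed.
Lemma sumn_term_le m f i : (forall j, (j < m)%nat -> 0 <= f j) -> (i < m)%nat -> f i <= sumn m f.
Proof. induction m; intros H Hi; [lia|]. simpl.
  assert (0 <= sumn m f) by (apply sumn_nonneg; intros; apply H; lia).
  destruct (Nat.eq_dec i m). subst. lra. assert (f i <= sumn m f) by (apply IHm; [intros; apply H; lia| lia]).
  pose proof (H m ltac:(lia)). lra. Qed.
Lemma sumn_abs m f : Rabs (sumn m f) <= sumn m (fun j => Rabs (f j)).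
Proof. induction m; simpl. rewrite Rabs_R0; lra. eapply Rle_trans; [apply Rabs_triang|]. lra. Qed.


Definition gram {S} (sub add : S->S->S) (scal : R->S->S) (ip : S->S->R) : Prop :=
 (forall a b c, ip (sub a b) c = ip a c - ip b c) /\
 (forall a b c, ip (add a b) c = ip a c + ip b c) /\
 (forall t a c, ip (scal t a) c = t * ip a c) /\
 (forall a b, ip a b = ip b a) /\
 (forall a, 0 <= ip a a).

Ltac gram_destr Hg ip sub add scal :=
  let Hsl := fresh "Hsl" in let Hal := fresh "Hal" in let Hcl := fresh "Hcl" in
  let Hsy := fresh "Hsy" in let Hnn := fresh "Hnn" in
  destruct Hg as (Hsl & Hal & Hcl & Hsy & Hnn);
  assert (Hsr : forall a b c, ip c (sub a b) = ip c a - ip c b)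
    by (intros a0 b0 c0; rewrite (Hsy c0), (Hsy c0 a0), (Hsy c0 b0); apply Hsl);
  assert (Har : forall a b c, ip c (add a b) = ip c a + ip c b)
    by (intros a0 b0 c0; rewrite (Hsy c0), (Hsy c0 a0), (Hsy c0 b0); apply Hal);
  assert (Hcr : forall t a c, ip c (scal t a) = t * ip c a)
    by (intros t0 a0 c0; rewrite (Hsy c0), Hcl, (Hsy a0); reflexivity).

Ltac gexp0 Hsl Hsr Hal Har Hcl Hcr := repeat (rewrite ?Hsl, ?Hsr, ?Hal, ?Har, ?Hcl, ?Hcr in *).


Lemma G_zero {S} sub add scal (ip : S->S->R) : gram sub add scal ip ->
  forall a, ip (sub a a) (sub a a) = 0.
Proof. intros Hg; gram_destr Hg ip sub add scal; intros; gexp0 Hsl Hsr Hal Har Hcl Hcr; lra. Qed.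

Lemma G_symN {S} sub add scal (ip : S->S->R) : gram sub add scal ip ->
  forall a b, ip (sub a b) (sub a b) = ip (sub b a) (sub b a).
Proof. intros Hg; gram_destr Hg ip sub add scal; intros; gexp0 Hsl Hsr Hal Har Hcl Hcr. rewrite (Hsy a b). lra. Qed.

Lemma G_extra {S} sub add scal (ip : S->S->R) : gram sub add scal ip ->
  forall u b w, ip (sub u (add u (scal w b))) (sub u (add u (scal w b))) = w^2 * ip b b.
Proof. intros Hg; gram_destr Hg ip sub add scal; intros; gexp0 Hsl Hsr Hal Har Hcl Hcr. try rewrite (Hsy u b); ring. Qed.

Lemma G_extra2 {S} sub add scal (ip : S->S->R) : gram sub add scal ip ->
  forall z u b w, ip (sub z (add u (scal w b))) (sub z (add u (scal w b)))
     <= 2 * ip (sub z u) (sub z u) + 2 * w^2 * ip b b.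
Proof. intros Hg; gram_destr Hg ip sub add scal; intros.
  pose proof (Hnn (add (sub z u) (scal w b))). gexp0 Hsl Hsr Hal Har Hcl Hcr.
  pose proof (Hsy u z); pose proof (Hsy b z); pose proof (Hsy b u). nra. Qed.

Lemma G_eps {S} sub add scal (ip : S->S->R) : gram sub add scal ip ->
  forall x z h t, 0 < t -> ip (sub x h) (sub x h) <=
     (1 + t) * ip (sub x z) (sub x z) + (1 + / t) * ip (sub z h) (sub z h).
Proof. intros Hg; gram_destr Hg ip sub add scal; intros x z h t Ht.
  set (a := sub x z). set (b := sub z h).
  assert (E : ip (sub x h) (sub x h) = ip a a + 2 * ip a b + ip b b).
  { unfold a, b. gexp0 Hsl Hsr Hal Har Hcl Hcr. rewrite (Hsy z x), (Hsy h x), (Hsy h z). ring. }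
  pose proof (Hnn (sub (scal t a) b)) as H0. rewrite Hsl, Hsr, Hsr, Hcl, Hcl, Hcr, Hcr in H0.
  pose proof (Hsy b a). rewrite E.
  assert (0 <= ip a a) by apply Hnn. assert (0 <= ip b b) by apply Hnn.
  assert (Hk : 2 * ip a b <= t * ip a a + / t * ip b b).
  { apply Rmult_le_reg_l with t; auto. replace (t * (t * ip a a + / t * ip b b)) with (t*t*ip a a + ip b b) by (field; lra). nra. }
  nra. Qed.

Lemma G_cs {S} sub add scal (ip : S->S->R) : gram sub add scal ip ->
  forall s d t, 0 < t -> - (t * ip s s + / t * ip d d) / 2 <= ip s d.
Proof. intros Hg; gram_destr Hg ip sub add scal; intros s d t Ht.
  pose proof (Hnn (add (scal t s) d)) as H0. rewrite Hal, Har, Har, Hcl, Hcl, Hcr, Hcr in H0.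
  pose proof (Hsy d s).
  apply Rmult_le_reg_l with (2*t); [lra|].
  replace (2 * t * (- (t * ip s s + / t * ip d d) / 2)) with (-(t*t*ip s s + ip d d)) by (field; lra). nra. Qed.

Lemma G_mid {S} sub add scal (ip : S->S->R) : gram sub add scal ip ->
  forall s x y, let m := scal (/2) (add x y) in
   ip s (sub x m) + ip s (sub y m) = 0 /\
   ip (sub x m) (sub x m) + ip (sub y m) (sub y m) = ip (sub x y) (sub x y) / 2.
Proof. intros Hg; gram_destr Hg ip sub add scal; intros. unfold m. split; gexp0 Hsl Hsr Hal Har Hcl Hcr. field.
  pose proof (Hsy y x). lra. Qed.

Lemma G_seg {S} sub add scal (ip : S->S->R) : gram sub add scal ip ->
  forall gr h z V t, let Vt := add z (scal t (sub V z)) in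
   ip gr (sub Vt h) = (1 - t) * ip gr (sub z h) + t * ip gr (sub V h) /\
   ip (sub Vt h) (sub Vt h) = (1 - t) * ip (sub z h) (sub z h) + t * ip (sub V h) (sub V h)
      - t * (1 - t) * ip (sub V z) (sub V z).
Proof. intros Hg; gram_destr Hg ip sub add scal; intros. unfold Vt. split; gexp0 Hsl Hsr Hal Har Hcl Hcr. ring.
  rewrite (Hsy h z), (Hsy h V), (Hsy z V). ring. Qed.


Lemma key_step {S} (sub : S->S->S) (ip : S->S->R) (f g Fobj : S->R) (gradf : S->S)
  (prox : R->S->S->Prop) (feas : S->Prop) (mu : R) :
 (forall x, Fobj x = f x + g x) ->
 (forall x h, f h + ip (gradf h) (sub x h) <= f x) ->
 (forall Lk h z, 0 < Lk -> prox Lk h z -> feas z /\ forall x, feas x ->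
     ip (gradf h) (sub z h) + Lk/2 * ip (sub z h) (sub z h) + g z + (Lk+mu)/2 * ip (sub x z) (sub x z)
     <= ip (gradf h) (sub x h) + Lk/2 * ip (sub x h) (sub x h) + g x) ->
 forall Lk h z, 0 < Lk -> prox Lk h z -> descent sub ip f gradf Lk h z ->
   feas z /\ forall x, feas x -> Fobj z + (Lk+mu)/2 * ip (sub x z) (sub x z) <= Fobj x + Lk/2 * ip (sub x h) (sub x h).
Proof.
  intros HF Hc Hp Lk h z HL Hpr Hd. destruct (Hp Lk h z HL Hpr) as [Hz Hq]. split; auto.
  intros x Hx. specialize (Hq x Hx). specialize (Hc x h). unfold descent in Hd.
  rewrite !HF. lra.
Qed.

Lemma backtrack_bounds eta Lmax Lprev ok L L0 :
  1 < eta -> 0 < L0 -> L0 <= Lprev -> L0 <= Lmax -> backtrack eta Lmax Lprev ok L ->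
  ok L /\ L0 <= L <= Lmax.
Proof.
  intros He H0 H1 H2 [nk [HL [Hok _]]]. split; auto. subst L.
  assert (1 <= eta ^ nk) by (apply pow_R1_Rle; lra).
  split; [|apply Rmin_r]. apply Rmin_glb; nra.
Qed.

Lemma sq_le_of_sqrt w q : 0 <= w -> 0 <= q -> w <= sqrt q -> w^2 <= q.
Proof. intros. pose proof (sqrt_sqrt q H0). pose proof (sqrt_pos q). nra. Qed.

Lemma step_facts {S} (sub add : S->S->S) (scal : R->S->S) (ip : S->S->R) (f Fobj : S->R)
  (gradf : S->S) (prox : R->S->S->Prop) (feas : S->Prop) (mu eta Lmax L0 : R) :
  gram sub add scal ip -> 0 < mu -> 1 < eta -> 0 < L0 -> L0 <= Lmax ->
  (forall Lk h z, 0 < Lk -> prox Lk h z -> descent sub ip f gradf Lk h z ->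
     feas z /\ forall x, feas x -> Fobj z + (Lk+mu)/2 * ip (sub x z) (sub x z) <= Fobj x + Lk/2 * ip (sub x h) (sub x h)) ->
  forall Lprev u2 u1 w L z, L0 <= Lprev <= Lmax -> feas u1 ->
  pgh_step sub add scal ip f gradf Fobj prox eta Lmax Lprev u2 u1 w L z ->
  L0 <= L <= Lmax /\ feas z /\
  Fobj z + (L + mu)/2 * ip (sub z u1) (sub z u1) <= Fobj u1 + Lprev/2 * ip (sub u1 u2) (sub u1 u2) /\
  forall x, feas x -> Fobj z <= Fobj x +
     (Lmax * (Lmax + mu) / mu * (Lmax / L0)) * (ip (sub z u1) (sub z u1) + ip (sub u1 u2) (sub u1 u2)).
Proof.
  intros Hg Hmu Heta HL0 HLm Hkey Lprev u2 u1 w L z [HP1 HP2] Hu1 Hst.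
  assert (Hnn : forall a, 0 <= ip a a) by (destruct Hg as (_&_&_&_&H); exact H).
  set (K0 := Lmax * (Lmax + mu) / (2*mu)).
  assert (HK0 : forall L', 0 < L' -> L' <= Lmax -> L' * (L' + mu) / (2 * mu) <= K0).
  { intros L' H1 H2. unfold K0. unfold Rdiv. apply Rmult_le_compat_r. apply Rlt_le, Rinv_0_lt_compat; lra.
    nra. }
  assert (HR : 1 <= Lmax / L0).
  { apply Rmult_le_reg_r with L0; auto. unfold Rdiv. rewrite Rmult_assoc, Rinv_l; lra. }
  assert (HK0p : 0 <= K0) by (unfold K0; apply Rmult_le_pos; [nra| apply Rlt_le, Rinv_0_lt_compat; lra]).
  replace (Lmax * (Lmax + mu) / mu * (Lmax / L0)) with (2 * K0 * (Lmax / L0)) by (unfold K0; field; lra).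
  assert (EB : forall L' h, 0 < L' -> L' <= Lmax -> feas z ->
     (forall x, feas x -> Fobj z + (L'+mu)/2 * ip (sub x z) (sub x z) <= Fobj x + L'/2 * ip (sub x h) (sub x h)) ->
     forall x, feas x -> Fobj z <= Fobj x + K0 * ip (sub z h) (sub z h)).
  { intros L' h H1 H2 Hz Hk x Hx. specialize (Hk x Hx).
    pose proof (G_eps sub add scal ip Hg x z h (mu / L') ltac:(apply Rdiv_lt_0_compat; lra)) as He.
    pose proof (HK0 L' H1 H2). pose proof (Hnn (sub z h)). pose proof (Hnn (sub x z)).
    replace (/ (mu / L')) with (L' / mu) in He by (field; lra).
    assert (L' / 2 * ip (sub x h) (sub x h) <= (L' + mu) / 2 * ip (sub x z) (sub x z) + L' * (L' + mu) / (2 * mu) * ip (sub z h) (sub z h)).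
    { apply Rle_trans with (L'/2 * ((1 + mu / L') * ip (sub x z) (sub x z) + (1 + L' / mu) * ip (sub z h) (sub z h))).
      apply Rmult_le_compat_l; lra. right. field. lra. }
    nra. }
  pose proof (Hnn (sub z u1)). pose proof (Hnn (sub u1 u2)).
  destruct Hst as [(Hw0 & Hw1 & Hbt & Hpr & _) | (L' & z' & _ & _ & _ & _ & _ & Hbt & Hpr)].
  - set (hx := add u1 (scal w (sub u1 u2))) in *.
    destruct (backtrack_bounds _ _ _ _ _ L0 Heta HL0 HP1 HLm Hbt) as [Hok [HLa HLb]].
    destruct (Hkey L hx z ltac:(lra) Hpr (Hok z Hpr)) as [Hz Hk].
    assert (Hw2 : w^2 <= Lprev / L).
    { apply sq_le_of_sqrt; auto. apply Rlt_le, Rdiv_lt_0_compat; lra. }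
    assert (Hw3 : L * w^2 <= Lprev).
    { apply Rmult_le_reg_r with (/L). apply Rinv_0_lt_compat; lra.
      replace (L * w ^ 2 * / L) with (w^2) by (field; lra). exact Hw2. }
    assert (Hw4 : w^2 <= Lmax / L0).
    { apply Rle_trans with (Lprev / L); auto. unfold Rdiv. apply Rmult_le_compat; try lra.
      apply Rlt_le, Rinv_0_lt_compat; lra. apply Rinv_le_contravar; lra. }
    repeat split; auto; try lra.
    + pose proof (Hk u1 Hu1) as H1. unfold hx in H1. rewrite G_extra with (1 := Hg) in H1.
      rewrite (G_symN sub add scal ip Hg u1 z) in H1. nra.
    + intros x Hx. pose proof (EB L hx ltac:(lra) HLb Hz Hk x Hx).
      pose proof (G_extra2 sub add scal ip Hg z u1 (sub u1 u2) w) as Hx2. fold hx in Hx2.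
      apply Rle_trans with (Fobj x + K0 * ip (sub z hx) (sub z hx)); auto.
      apply Rplus_le_compat_l.
      apply Rle_trans with (K0 * (2 * ip (sub z u1) (sub z u1) + 2 * (Lmax/L0) * ip (sub u1 u2) (sub u1 u2))).
      apply Rmult_le_compat_l; auto. nra.
      assert (0 <= K0 * ip (sub z u1) (sub z u1)) by (apply Rmult_le_pos; auto).
      assert (0 <= K0 * ip (sub u1 u2) (sub u1 u2)) by (apply Rmult_le_pos; auto).
      nra.
  - destruct (backtrack_bounds _ _ _ _ _ L0 Heta HL0 HP1 HLm Hbt) as [Hok [HLa HLb]].
    destruct (Hkey L u1 z ltac:(lra) Hpr (Hok z Hpr)) as [Hz Hk].
    repeat split; auto; try lra.
    + pose proof (Hk u1 Hu1) as H1. rewrite G_zero with (1 := Hg) in H1.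
      rewrite (G_symN sub add scal ip Hg u1 z) in H1. nra.
    + intros x Hx. pose proof (EB L u1 ltac:(lra) HLb Hz Hk x Hx).
      assert (0 <= K0 * ip (sub z u1) (sub z u1)) by (apply Rmult_le_pos; auto).
      assert (0 <= K0 * ip (sub u1 u2) (sub u1 u2)) by (apply Rmult_le_pos; auto).
      nra.
Qed.


Lemma sqrt_pow_eq a k : 0 <= a -> sqrt (a ^ k) = (sqrt a) ^ k.
Proof. intros Ha. induction k; simpl. apply sqrt_1. rewrite sqrt_mult_alt by auto. rewrite IHk. reflexivity. Qed.

Lemma pow_small s c eps : 0 <= s < 1 -> 0 < eps -> exists k, c * s ^ k < eps.
Proof. intros Hs He.
  destruct (pow_lt_1_zero s ltac:(rewrite Rabs_pos_eq; lra) (eps / (Rabs c + 1))) as [N HN].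
  apply Rdiv_lt_0_compat; [lra| pose proof (Rabs_pos c); lra].
  exists N. specialize (HN N (le_n N)).
  pose proof (pow_le s N ltac:(lra)). rewrite Rabs_pos_eq in HN by auto.
  apply Rle_lt_trans with (Rabs c * s ^ N). { pose proof (Rle_abs c). nra. }
  apply Rle_lt_trans with ((Rabs c + 1) * s ^ N). nra.
  apply Rmult_lt_reg_l with (/ (Rabs c + 1)). apply Rinv_0_lt_compat; pose proof (Rabs_pos c); lra.
  rewrite <- Rmult_assoc, Rinv_l by (pose proof (Rabs_pos c); lra). unfold Rdiv in HN. lra.
Qed.

Lemma pow_decr s k m : 0 <= s <= 1 -> (k <= m)%nat -> s ^ m <= s ^ k.
Proof. intros Hs Hkm. induction Hkm. lra. simpl. pose proof (pow_le s m ltac:(lra)). nra. Qed.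

Lemma le_eps a : (forall eps, 0 < eps -> a <= eps) -> a <= 0.
Proof. intros H. destruct (Rle_lt_dec a 0); auto. specialize (H (a/2) ltac:(lra)). lra. Qed.

Lemma main_generic {St} (sub add : St->St->St) (scal : R->St->St) (ip : St->St->R) (f g Fobj : St->R)
  (gradf : St->St) (prox : R->St->St->Prop) (feas : St->Prop) (mu eta Lmax : R) (u : nat->St) (L om : nat -> R) :
 gram sub add scal ip ->
 0 < mu -> 1 < eta -> 0 < L 0%nat -> L 0%nat <= Lmax ->
 (forall x, Fobj x = f x + g x) ->
 (forall x, feas x -> 0 <= Fobj x) ->
 (forall x h, f h + ip (gradf h) (sub x h) <= f x) ->
 (forall Lk h z, 0 < Lk -> prox Lk h z -> feas z /\ forall x, feas x ->
     ip (gradf h) (sub z h) + Lk/2 * ip (sub z h) (sub z h) + g z + (Lk+mu)/2 * ip (sub x z) (sub x z)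
     <= ip (gradf h) (sub x h) + Lk/2 * ip (sub x h) (sub x h) + g x) ->
 (forall y, feas y -> exists s, forall x, feas x -> g y + ip s (sub x y) + mu/2 * ip (sub x y) (sub x y) <= g x) ->
 (forall x y, feas x -> feas y -> feas (scal (/2) (add x y))) ->
 (forall (v : nat -> St) C tau, 0 <= C -> 0 <= tau < 1 -> (forall k, feas (v k)) ->
     (forall k m, (k <= m)%nat -> ip (sub (v k) (v m)) (sub (v k) (v m)) <= C * tau ^ k) ->
     exists us M, feas us /\ 0 <= M /\ forall k, ip (sub (v k) us) (sub (v k) us) <= M * C * tau ^ k) ->
 feas (u 0%nat) ->
 (forall k, pgh_step sub add scal ip f gradf Fobj prox eta Lmax (L k) (u (Nat.pred k)) (u k) (om k) (L (S k)) (u (S k))) ->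
 Rlinear_to_unique_min sub ip Fobj feas u.
Proof.
  intros Hg Hmu Heta HL0 HLm HF HF0 Hc Hp Hsgg Hmid Hcompl Hu0 Hst.
  assert (Hnn : forall a, 0 <= ip a a) by (destruct Hg as (_&_&_&_&H); exact H).
  pose proof (key_step sub ip f g Fobj gradf prox feas mu HF Hc Hp) as Hkey.
  set (L0 := L 0%nat) in *.
  set (K := Lmax * (Lmax + mu) / mu * (Lmax / L0)).
  assert (HK : 0 <= K).
  { unfold K. apply Rmult_le_pos; apply Rmult_le_pos; try apply Rlt_le, Rinv_0_lt_compat; nra. }
  assert (Hsg : forall y, feas y -> exists s, forall x, feas x ->
            Fobj y + ip s (sub x y) + mu/2 * ip (sub x y) (sub x y) <= Fobj x).
  { intros y Hy. destruct (Hsgg y Hy) as [s Hs]. exists (add (gradf y) s). intros x Hx.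
    specialize (Hs x Hx). specialize (Hc x y). destruct Hg as (_&Hal&_). rewrite Hal, !HF. lra. }
  assert (Hinv : forall k, L0 <= L k <= Lmax /\ feas (u k)).
  { induction k. { split; [split; [apply Rle_refl| exact HLm]| exact Hu0]. }
    destruct IHk as [HLk Huk].
    destruct (step_facts sub add scal ip f Fobj gradf prox feas mu eta Lmax L0 Hg Hmu Heta HL0 HLm Hkey
       _ _ _ _ _ _ HLk Huk (Hst k)) as (H1 & H2 & _). auto. }
  assert (Hfacts : forall k,
    Fobj (u (S k)) + (L (S k) + mu)/2 * ip (sub (u (S k)) (u k)) (sub (u (S k)) (u k)) <=
      Fobj (u k) + L k/2 * ip (sub (u k) (u (Nat.pred k))) (sub (u k) (u (Nat.pred k))) /\
    forall x, feas x -> Fobj (u (S k)) <= Fobj x + K * (ip (sub (u (S k)) (u k)) (sub (u (S k)) (u k))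
        + ip (sub (u k) (u (Nat.pred k))) (sub (u k) (u (Nat.pred k))))).
  { intros k. destruct (Hinv k) as [HLk Huk].
    destruct (step_facts sub add scal ip f Fobj gradf prox feas mu eta Lmax L0 Hg Hmu Heta HL0 HLm Hkey
       _ _ _ _ _ _ HLk Huk (Hst k)) as (H1 & H2 & H3 & H4). auto. }
  destruct (completeness (fun r => exists v, feas v /\ r = - Fobj v)) as [m [Hub Hlub]].
  { exists 0. intros r [v [Hv ->]]. pose proof (HF0 v Hv). lra. }
  { exists (- Fobj (u 0%nat)). eauto. }
  set (Fs := - m).
  assert (Fs_le : forall v, feas v -> Fs <= Fobj v).
  { intros v Hv. assert (- Fobj v <= m) by (apply Hub; eauto). unfold Fs; lra. }
  assert (Fs_ge : forall c, (forall v, feas v -> c <= Fobj v) -> c <= Fs).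
  { intros c Hcv. assert (m <= - c). { apply Hlub. intros r [v [Hv ->]]. pose proof (Hcv v Hv). lra. }
    unfold Fs; lra. }
  assert (Hmidp : forall x y, feas x -> feas y ->
     mu / 4 * ip (sub x y) (sub x y) <= (Fobj x - Fs) + (Fobj y - Fs)).
  { intros x y Hx Hy. pose proof (Hmid x y Hx Hy) as Hm. destruct (Hsg _ Hm) as [s Hs].
    pose proof (Hs x Hx). pose proof (Hs y Hy). pose proof (Fs_le _ Hm).
    destruct (G_mid sub add scal ip Hg s x y) as [E1 E2]. simpl in E1, E2. assert (mu / 2 * (ip (sub x (scal (/2) (add x y))) (sub x (scal (/2) (add x y))) + ip (sub y (scal (/2) (add x y))) (sub y (scal (/2) (add x y)))) = mu / 2 * (ip (sub x y) (sub x y) / 2)) by (rewrite E2; reflexivity). lra. }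
  set (P := fun k => ip (sub (u k) (u (Nat.pred k))) (sub (u k) (u (Nat.pred k)))).
  set (D := fun k => ip (sub (u (S k)) (u k)) (sub (u (S k)) (u k))).
  set (e := fun k => Fobj (u k) - Fs).
  set (Phi := fun k => e k + L k / 2 * P k).
  assert (HP0 : P 0%nat = 0) by (unfold P; simpl; apply (G_zero sub add scal ip Hg)).
  assert (HPS : forall k, P (S k) = D k) by reflexivity.
  assert (He0 : forall k, 0 <= e k) by (intros; unfold e; pose proof (Fs_le _ (proj2 (Hinv k))); lra).
  assert (HPn : forall k, 0 <= P k) by (intros; apply Hnn).
  assert (HDn : forall k, 0 <= D k) by (intros; apply Hnn).
  assert (HPhi0 : forall k, 0 <= Phi k).
  { intros k. unfold Phi. pose proof (He0 k). pose proof (HPn k). destruct (Hinv k). nra. }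
  assert (Ha : forall k, Phi (S k) + mu / 2 * D k <= Phi k).
  { intros k. destruct (Hfacts k) as [H1 _]. unfold Phi, e. rewrite HPS. fold (D k) in H1. fold (P k) in H1. lra. }
  set (A := K + Lmax / 2).
  assert (HA : 0 < A) by (unfold A; lra).
  assert (Hb : forall k, Phi (S k) <= A * (D k + P k)).
  { intros k. destruct (Hfacts k) as [_ H2]. assert (e (S k) <= K * (D k + P k)).
    { unfold e. assert (Fobj (u (S k)) - K * (D k + P k) <= Fs). apply Fs_ge. intros v Hv.
      specialize (H2 v Hv). fold (D k) (P k) in H2. lra. lra. }
    unfold Phi. rewrite HPS. destruct (Hinv (S k)). pose proof (HDn k). pose proof (HPn k). unfold A. nra. }
  set (rho := 2 * A / (2 * A + mu)).
  assert (Hrho : 0 < rho < 1).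
  { unfold rho. split. apply Rdiv_lt_0_compat; lra. apply Rmult_lt_reg_r with (2*A+mu). lra.
    unfold Rdiv. rewrite Rmult_assoc, Rinv_l; lra. }
  assert (Hc2 : forall k, Phi (S (S k)) <= rho * Phi k).
  { intros k. pose proof (Ha k). pose proof (Ha (S k)). pose proof (Hb (S k)). rewrite HPS in H1.
    unfold rho. apply Rmult_le_reg_l with (2*A+mu). lra.
    replace ((2 * A + mu) * (2 * A / (2 * A + mu) * Phi k)) with (2 * A * Phi k) by (field; lra).
    nra. }
  set (sig := sqrt rho).
  assert (Hsig : 0 < sig < 1).
  { unfold sig. split. apply sqrt_lt_R0; lra. rewrite <- sqrt_1. apply sqrt_lt_1_alt; lra. }
  assert (Hsig2 : sig * sig = rho) by (unfold sig; apply sqrt_sqrt; lra).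
  set (B := Phi 0%nat / sig).
  assert (HB : 0 <= B) by (unfold B; apply Rmult_le_pos; [apply HPhi0| apply Rlt_le, Rinv_0_lt_compat; lra]).
  assert (HPhiB : forall k, Phi k <= B * sig ^ k /\ Phi (S k) <= B * sig ^ (S k)).
  { induction k.
    - simpl. unfold B. split. apply Rmult_le_reg_r with sig; [lra|].
      replace (Phi 0%nat / sig * 1 * sig) with (Phi 0%nat) by (field; lra). pose proof (HPhi0 0%nat). nra.
      replace (Phi 0%nat / sig * (sig * 1)) with (Phi 0%nat) by (field; lra). pose proof (Ha 0%nat).
      pose proof (HDn 0%nat). nra.
    - destruct IHk as [H1 H2]. split; auto. pose proof (Hc2 k).
      replace (B * sig ^ S (S k)) with (rho * (B * sig ^ k)) by (simpl; rewrite <- Hsig2; ring).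
      pose proof (HPhi0 k). nra. }
  assert (HeB : forall k, e k <= B * sig ^ k).
  { intros k. destruct (HPhiB k) as [H1 _]. unfold Phi in H1. pose proof (HPn k). destruct (Hinv k). nra. }
  assert (Hcau : forall k m0, (k <= m0)%nat -> ip (sub (u k) (u m0)) (sub (u k) (u m0)) <= (8 * B / mu) * sig ^ k).
  { intros k m0 Hkm. pose proof (Hmidp (u k) (u m0) (proj2 (Hinv k)) (proj2 (Hinv m0))).
    pose proof (HeB k). pose proof (HeB m0). fold (e k) (e m0) in H.
    assert (sig ^ m0 <= sig ^ k). { apply pow_decr; [lra| exact Hkm]. }
    assert (e k + e m0 <= 2 * B * sig ^ k) by nra.
    apply Rmult_le_reg_l with (mu/4). lra. replace (mu / 4 * (8 * B / mu * sig ^ k)) with (2 * B * sig ^ k) by (field; lra).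
    lra. }
  destruct (Hcompl u (8 * B / mu) sig ltac:(apply Rmult_le_pos; [lra| apply Rlt_le, Rinv_0_lt_compat; lra])
     ltac:(lra) (fun k => proj2 (Hinv k)) Hcau) as (us & M & Hus & HM & Hconv).
  assert (HusFs : Fobj us <= Fs).
  { destruct (Hsg us Hus) as [s Hs].
    assert (Fobj us - Fs <= 0); [|lra]. apply le_eps. intros eps Heps.
    set (t := eps / (2 * (ip s s + 1))).
    assert (Ht : 0 < t) by (unfold t; pose proof (Hnn s); apply Rdiv_lt_0_compat; lra).
    assert (Ht2 : t * ip s s <= eps / 2).
    { unfold t. pose proof (Hnn s). apply Rmult_le_reg_r with (2 * (ip s s + 1)). lra.
      replace (eps / (2 * (ip s s + 1)) * ip s s * (2 * (ip s s + 1))) with (eps * ip s s) by (field; lra). nra. }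
    destruct (pow_small sig (B + M * (8 * B / mu) / (2 * t)) (eps/2) ltac:(lra) ltac:(lra)) as [k Hk].
    specialize (Hs (u k) (proj2 (Hinv k))). pose proof (HeB k). unfold e in H.
    pose proof (Hconv k). pose proof (G_cs sub add scal ip Hg s (sub (u k) us) t Ht).
    pose proof (Hnn (sub (u k) us)).
    assert (/ t * ip (sub (u k) us) (sub (u k) us) <= / t * (M * (8 * B / mu) * sig ^ k)).
    { apply Rmult_le_compat_l; auto. apply Rlt_le, Rinv_0_lt_compat; auto. }
    assert (Hexp : (B + M * (8 * B / mu) / (2 * t)) * sig ^ k = B * sig ^ k + / t * (M * (8 * B / mu) * sig ^ k) / 2)
      by (field; lra).
    rewrite Hexp in Hk.
    assert (0 <= mu/2 * ip (sub (u k) us) (sub (u k) us)) by (apply Rmult_le_pos; lra). lra. }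
  exists us. split; [exact Hus|]. split.
  { intros v Hv. pose proof (Fs_le v Hv). lra. }
  split.
  { intros v Hv Hle. pose proof (Hmidp v us Hv Hus). pose proof (Fs_le v Hv). pose proof (Hnn (sub v us)).
    assert (mu / 4 * ip (sub v us) (sub v us) <= 0) by lra.
    assert (ip (sub v us) (sub v us) <= 0). { apply Rmult_le_reg_l with (mu/4). lra. lra. } lra. }
  exists (sqrt (M * (8 * B / mu)) + 1), (sqrt sig).
  assert (HMC : 0 <= M * (8 * B / mu)) by (apply Rmult_le_pos; auto; apply Rmult_le_pos; [lra| apply Rlt_le, Rinv_0_lt_compat; lra]).
  split. pose proof (sqrt_pos (M * (8 * B / mu))); lra.
  split. split. apply sqrt_lt_R0; lra. rewrite <- sqrt_1. apply sqrt_lt_1_alt; lra.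
  intros k. apply Rle_trans with (sqrt (M * (8 * B / mu) * sig ^ k)).
  apply sqrt_le_1_alt. apply Hconv.
  rewrite sqrt_mult_alt by auto. rewrite sqrt_pow_eq by lra.
  apply Rmult_le_compat_r. apply pow_le, sqrt_pos. lra.
Qed.


Lemma phiH_nonneg d t : 0 < d -> 0 <= phiH d t.
Proof. intros Hd. unfold phiH. destruct (Rlt_dec 1 t). lra. destruct (Rlt_dec (1 - d) t).
  apply Rmult_le_pos. nra. apply Rlt_le, Rinv_0_lt_compat; lra. lra. Qed.

Lemma phiH_sub d s t : 0 < d -> phiH d t + dphiH d t * (s - t) <= phiH d s.
Proof. intros Hd. unfold phiH, dphiH.
  assert (E1 : forall a, a / (2 * d) = a * / d / 2) by (intros; field; lra).
  assert (E2 : forall a, a / d = a * / d) by (intros; field; lra).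
  rewrite !E1, !E2.
  assert (Hi : d * / d = 1) by (field; lra). assert (0 < / d) by (apply Rinv_0_lt_compat; lra).
  set (i := / d) in *. clearbody i.
  destruct (Rlt_dec 1 t); destruct (Rlt_dec 1 s); try destruct (Rlt_dec (1 - d) s);
  try destruct (Rlt_dec (1 - d) t); try nra.
  - assert (0 <= (1 - t) * i) by nra. nra.
  - assert (0 <= (s - t)^2 * i) by (apply Rmult_le_pos; [apply pow2_ge_0|lra]).
    replace ((1 - s) ^ 2 * i / 2) with ((1 - t) ^ 2 * i / 2 + (t - 1) * i * (s - t) + (s - t)^2 * i / 2) by field. lra.
  - apply Rmult_le_reg_l with d; [lra|].
    replace (d * ((1 - t) ^ 2 * i / 2 + (t - 1) * i * (s - t))) with ((d * i) * ((1 - t) ^ 2 / 2 + (t - 1) * (s - t)))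
      by field. rewrite Hi, Rmult_1_l.
    assert (0 <= (d - (1 - t)) * ((1 - s) - (d + (1 - t)) / 2)) by (apply Rmult_le_pos; lra).
    nra.
Qed.


Lemma sumn_mulr m f c : sumn m f * c = sumn m (fun i => f i * c).
Proof. induction m; simpl; [lra|]. rewrite <- IHm. ring. Qed.

Lemma dot_sub_r p v a b : dot p v (fun j => a j - b j) = dot p v a - dot p v b.
Proof. unfold dot. rewrite <- sumn_sub. apply sumn_ext. intros; ring. Qed.

Lemma bgram p : gram bsub badd bscal (bip p).
Proof.
  unfold gram, bip, bsub, badd, bscal, dot; simpl. repeat split.
  - intros. assert (E : sumn p (fun j => (snd a j - snd b j) * snd c j) =
      sumn p (fun j => snd a j * snd c j) - sumn p (fun j => snd b j * snd c j))
      by (rewrite <- sumn_sub; apply sumn_ext; intros; ring). rewrite E; ring.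
  - intros. assert (E : sumn p (fun j => (snd a j + snd b j) * snd c j) =
      sumn p (fun j => snd a j * snd c j) + sumn p (fun j => snd b j * snd c j))
      by (rewrite <- sumn_add; apply sumn_ext; intros; ring). rewrite E; ring.
  - intros. assert (E : sumn p (fun j => (t * snd a j) * snd c j) =
      t * sumn p (fun j => snd a j * snd c j))
      by (rewrite <- sumn_scal; apply sumn_ext; intros; ring). rewrite E; ring.
  - intros. rewrite (sumn_ext p _ (fun j => snd b j * snd a j)) by (intros; ring). ring.
  - intros. assert (0 <= sumn p (fun j => snd a j * snd a j)) by (apply sumn_nonneg; intros; nra). nra.
Qed.

Lemma aux_grad n p (T y : nat -> R) (x : nat -> vec) db (dv : vec) :
  / INR n * sumn n (fun i => T i * y i) * db +
  sumn p (fun j => / INR n * sumn n (fun i => T i * y i * x i j) * dv j)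
  = / INR n * sumn n (fun i => T i * (y i * (db + sumn p (fun j => x i j * dv j)))).
Proof.
  rewrite (sumn_ext p _ (fun j => / INR n * sumn n (fun i => T i * y i * x i j * dv j)))
    by (intros; rewrite Rmult_assoc, sumn_mulr; reflexivity).
  rewrite sumn_scal, <- sumn_swap.
  rewrite (sumn_ext n (fun i => T i * (y i * (db + sumn p (fun j => x i j * dv j))))
     (fun i => T i * y i * db + sumn p (fun j => T i * y i * x i j * dv j))).
  2:{ intros i _. rewrite (sumn_ext p (fun j => T i * y i * x i j * dv j) (fun j => (T i * y i) * (x i j * dv j)))
        by (intros; ring). rewrite sumn_scal. ring. }
  rewrite sumn_add, <- (sumn_mulr n (fun i => T i * y i)). ring.
Qed.

Lemma bgrad_ip n p delta x y h d :
  bip p (grad_bin n p delta x y h) d =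
  / INR n * sumn n (fun i => dphiH delta (y i * (fst h + dot p (x i) (snd h))) *
                             (y i * (fst d + dot p (x i) (snd d)))).
Proof.
  unfold bip, grad_bin, dot; simpl.
  exact (aux_grad n p (fun i => dphiH delta (y i * (fst h + sumn p (fun j => x i j * snd h j)))) y x (fst d) (snd d)).
Qed.

Lemma inv_n_pos n : (1 <= n)%nat -> 0 < / INR n.
Proof. intros. apply Rinv_0_lt_compat, lt_0_INR; lia. Qed.

Lemma bconv n p delta x y a h : (1 <= n)%nat -> 0 < delta ->
  f_bin n p delta x y h + bip p (grad_bin n p delta x y h) (bsub a h) <= f_bin n p delta x y a.
Proof.
  intros Hn Hd. rewrite bgrad_ip. unfold f_bin. rewrite <- Rmult_plus_distr_l, <- sumn_add.
  apply Rmult_le_compat_l. apply Rlt_le, inv_n_pos; auto.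
  apply sumn_le. intros i _. simpl. rewrite dot_sub_r.
  pose proof (phiH_sub delta (y i * (fst a + dot p (x i) (snd a))) (y i * (fst h + dot p (x i) (snd h))) Hd).
  replace (y i * (fst a - fst h + (dot p (x i) (snd a) - dot p (x i) (snd h)))) with
    (y i * (fst a + dot p (x i) (snd a)) - y i * (fst h + dot p (x i) (snd h))) by ring.
  exact H.
Qed.


Lemma soft_cases nu A : 0 <= nu ->
  (nu < A /\ soft nu A = A - nu) \/ (A < - nu /\ soft nu A = A + nu) \/ (-nu <= A <= nu /\ soft nu A = 0).
Proof. intros Hn. unfold soft, Rsgn, Rmax.
  destruct (Rlt_dec 0 A).
  - rewrite Rabs_pos_eq by lra. destruct (Rle_dec (A - nu) 0).
    + right; right. split; lra.
    + left. split; lra.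
  - destruct (Rlt_dec A 0).
    + rewrite Rabs_left by lra. destruct (Rle_dec (- A - nu) 0).
      * right; right. split; lra.
      * right; left. split; lra.
    + right; right. split; [lra|]. ring.
Qed.

Lemma abs_facts a : a <= Rabs a /\ - a <= Rabs a.
Proof. split. apply Rle_abs. rewrite <- Rabs_Ropp. apply Rle_abs. Qed.

Lemma coord_w Lk lam1 lam2 mu g0 h0 a0 z0 : 0 < Lk -> 0 <= lam1 -> 0 < lam2 -> mu <= lam2 ->
  z0 = / (Lk + lam2) * soft lam1 (Lk * h0 - g0) ->
  g0 * (z0 - h0) + Lk / 2 * ((z0 - h0) * (z0 - h0)) + (lam1 * Rabs z0 + lam2 / 2 * (z0 * z0))
  + (Lk + mu) / 2 * ((a0 - z0) * (a0 - z0))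
  <= g0 * (a0 - h0) + Lk / 2 * ((a0 - h0) * (a0 - h0)) + (lam1 * Rabs a0 + lam2 / 2 * (a0 * a0)).
Proof.
  intros HL H1 H2 Hmu Hz. set (A := Lk * h0 - g0) in *. set (c := Lk + lam2) in *.
  assert (Hc : 0 < c) by (unfold c; lra).
  assert (Hcz : c * z0 = soft lam1 A) by (rewrite Hz; field; lra).
  assert (Hkey : 0 <= (c * z0 - A) * (a0 - z0) + lam1 * (Rabs a0 - Rabs z0)).
  { destruct (abs_facts a0) as [Ha1 Ha2].
    destruct (soft_cases lam1 A H1) as [[HA Hs]|[[HA Hs]|[HA Hs]]]; rewrite Hcz, Hs.
    - assert (0 < z0) by (apply Rmult_lt_reg_l with c; lra). rewrite (Rabs_pos_eq z0) by lra. nra.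
    - assert (z0 < 0) by (apply Rmult_lt_reg_l with c; lra). rewrite (Rabs_left z0) by lra. nra.
    - assert (Hz0 : z0 = 0) by (apply Rmult_eq_reg_l with c; lra). rewrite Hz0, Rabs_R0.
      assert (- (lam1 * Rabs a0) <= A * a0 <= lam1 * Rabs a0).
      { destruct (Rle_dec 0 a0). rewrite Rabs_pos_eq by lra. split; nra. rewrite Rabs_left by lra. split; nra. }
      nra. }
  assert (E : g0 * (a0 - h0) + Lk / 2 * ((a0 - h0) * (a0 - h0)) + (lam1 * Rabs a0 + lam2 / 2 * (a0 * a0))
   - (g0 * (z0 - h0) + Lk / 2 * ((z0 - h0) * (z0 - h0)) + (lam1 * Rabs z0 + lam2 / 2 * (z0 * z0))
      + (Lk + mu) / 2 * ((a0 - z0) * (a0 - z0)))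
   = (c * z0 - A) * (a0 - z0) + lam1 * (Rabs a0 - Rabs z0) + (lam2 - mu) / 2 * ((a0 - z0) * (a0 - z0)))
   by (unfold A, c; field).
  assert (0 <= (lam2 - mu) / 2 * ((a0 - z0) * (a0 - z0))) by (apply Rmult_le_pos; [lra| exact (Rle_0_sqr (a0 - z0))]).
  lra.
Qed.

Lemma coord_b Lk lam3 mu g0 h0 a0 z0 : 0 < Lk -> 0 < lam3 -> mu <= lam3 ->
  z0 = (Lk * h0 - g0) / (Lk + lam3) ->
  g0 * (z0 - h0) + Lk / 2 * ((z0 - h0) * (z0 - h0)) + lam3 / 2 * z0 ^ 2
  + (Lk + mu) / 2 * ((a0 - z0) * (a0 - z0))
  <= g0 * (a0 - h0) + Lk / 2 * ((a0 - h0) * (a0 - h0)) + lam3 / 2 * a0 ^ 2.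
Proof.
  intros HL H3 Hmu Hz.
  assert (Hcz : (Lk + lam3) * z0 = Lk * h0 - g0) by (rewrite Hz; field; lra).
  assert (E : g0 * (a0 - h0) + Lk / 2 * ((a0 - h0) * (a0 - h0)) + lam3 / 2 * a0 ^ 2 -
    (g0 * (z0 - h0) + Lk / 2 * ((z0 - h0) * (z0 - h0)) + lam3 / 2 * z0 ^ 2 + (Lk + mu) / 2 * ((a0 - z0) * (a0 - z0)))
    = ((Lk + lam3) * z0 - (Lk * h0 - g0)) * (a0 - z0) + (lam3 - mu) / 2 * ((a0 - z0) * (a0 - z0))) by field.
  rewrite Hcz in E.
  assert (0 <= (lam3 - mu) / 2 * ((a0 - z0) * (a0 - z0))) by (apply Rmult_le_pos; [lra| exact (Rle_0_sqr (a0 - z0))]).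
  lra.
Qed.

Lemma bprox p lam1 lam2 lam3 mu Lk (gr h a z : bstate) :
  0 < Lk -> 0 <= lam1 -> 0 < lam2 -> 0 < lam3 -> mu <= lam2 -> mu <= lam3 ->
  fst z = (Lk * fst h - fst gr) / (Lk + lam3) ->
  (forall j, snd z j = / (Lk + lam2) * soft lam1 (Lk * snd h j - snd gr j)) ->
  bip p gr (bsub z h) + Lk/2 * bip p (bsub z h) (bsub z h) + g_bin p lam1 lam2 lam3 z
    + (Lk+mu)/2 * bip p (bsub a z) (bsub a z)
  <= bip p gr (bsub a h) + Lk/2 * bip p (bsub a h) (bsub a h) + g_bin p lam1 lam2 lam3 a.
Proof.
  intros HL H1 H2 H3 Hm2 Hm3 Hzb Hzw.
  pose proof (coord_b Lk lam3 mu (fst gr) (fst h) (fst a) (fst z) HL H3 Hm3 Hzb) as Hb.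
  assert (Hw : 0 <= sumn p (fun j =>
     (snd gr j * (snd a j - snd h j) + Lk / 2 * ((snd a j - snd h j) * (snd a j - snd h j))
       + (lam1 * Rabs (snd a j) + lam2 / 2 * (snd a j * snd a j)))
     - (snd gr j * (snd z j - snd h j) + Lk / 2 * ((snd z j - snd h j) * (snd z j - snd h j))
       + (lam1 * Rabs (snd z j) + lam2 / 2 * (snd z j * snd z j))
       + (Lk + mu) / 2 * ((snd a j - snd z j) * (snd a j - snd z j))))).
  { apply sumn_nonneg. intros j _.
    pose proof (coord_w Lk lam1 lam2 mu (snd gr j) (snd h j) (snd a j) (snd z j) HL H1 H2 Hm2 (Hzw j)). lra. }
  repeat rewrite ?sumn_sub, ?sumn_add, ?sumn_scal in Hw.
  unfold bip, g_bin, norm1, dot, bsub; simpl. lra.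
Qed.


Lemma abs_le_sqrt x B : x * x <= B -> Rabs x <= sqrt B.
Proof. intros H. rewrite <- sqrt_Rsqr_abs. apply sqrt_le_1_alt. exact H. Qed.

Lemma coord_lim (a : nat -> R) C tau : 0 <= C -> 0 <= tau < 1 ->
  (forall k m, (k <= m)%nat -> (a k - a m) * (a k - a m) <= C * tau ^ k) ->
  {l | forall k, (a k - l) * (a k - l) <= C * tau ^ k}.
Proof.
  intros HC Ht Ha.
  assert (Hcau : Cauchy_crit a).
  { intros eps Heps. destruct (pow_small tau C (eps * eps) Ht ltac:(nra)) as [N HN].
    exists N. intros n m Hn Hm. unfold R_dist.
    assert (Hsq : (a n - a m) * (a n - a m) < eps * eps).
    { destruct (Nat.le_ge_cases n m) as [Hnm|Hnm].
      - pose proof (Ha n m Hnm). pose proof (pow_decr tau N n ltac:(lra) Hn). nra.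
      - pose proof (Ha m n Hnm). pose proof (pow_decr tau N m ltac:(lra) Hm).
        replace ((a n - a m) * (a n - a m)) with ((a m - a n) * (a m - a n)) by ring. nra. }
    destruct (Rcase_abs (a n - a m)); [rewrite Rabs_left by lra | rewrite Rabs_pos_eq by lra]; nra. }
  destruct (R_complete a Hcau) as [l Hl]. exists l. intros k.
  assert (Habs : Rabs (a k - l) <= sqrt (C * tau ^ k)).
  { assert (Rabs (a k - l) - sqrt (C * tau ^ k) <= 0); [|lra]. apply le_eps. intros eps Heps.
    destruct (Hl eps Heps) as [N HN]. specialize (HN (max N k) ltac:(lia)). unfold R_dist in HN.
    pose proof (abs_le_sqrt _ _ (Ha k (max N k) ltac:(lia))).
    pose proof (Rabs_triang (a k - a (max N k)) (a (max N k) - l)).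
    replace (a k - a (max N k) + (a (max N k) - l)) with (a k - l) in H0 by ring. lra. }
  pose proof (Rabs_pos (a k - l)). pose proof (sqrt_pos (C * tau ^ k)).
  assert (0 <= C * tau ^ k) by (apply Rmult_le_pos; auto; apply pow_le; lra).
  pose proof (sqrt_sqrt (C * tau ^ k) H1).
  assert (Rabs (a k - l) * Rabs (a k - l) <= C * tau ^ k) by nra.
  rewrite <- Rabs_mult, Rabs_pos_eq in H3 by exact (Rle_0_sqr (a k - l)). exact H3.
Qed.


Lemma sgn_facts y0 a0 : Rsgn y0 * y0 = Rabs y0 /\ Rsgn y0 * a0 <= Rabs a0.
Proof. destruct (abs_facts a0). unfold Rsgn. destruct (Rlt_dec 0 y0).
  rewrite Rabs_pos_eq by lra. split; lra.
  destruct (Rlt_dec y0 0). rewrite Rabs_left by lra. split; lra.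
  assert (y0 = 0) by lra. subst. rewrite Rabs_R0. split; [ring| pose proof (Rabs_pos a0); lra]. Qed.

Lemma coord_sg lam1 lam2 mu y0 a0 : 0 <= lam1 -> mu <= lam2 ->
  (lam1 * Rabs y0 + lam2 / 2 * (y0 * y0)) + (lam1 * Rsgn y0 + lam2 * y0) * (a0 - y0)
  + mu / 2 * ((a0 - y0) * (a0 - y0)) <= lam1 * Rabs a0 + lam2 / 2 * (a0 * a0).
Proof. intros H1 H2. destruct (sgn_facts y0 a0) as [E1 E2].
  assert (0 <= (lam2 - mu)/2 * ((a0 - y0) * (a0 - y0))) by (apply Rmult_le_pos; [lra| exact (Rle_0_sqr _)]).
  assert (lam1 * (Rsgn y0 * a0) <= lam1 * Rabs a0) by (apply Rmult_le_compat_l; auto).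
  assert (E : lam1 * Rabs a0 + lam2 / 2 * (a0 * a0) - ((lam1 * Rabs y0 + lam2 / 2 * (y0 * y0)) +
    (lam1 * Rsgn y0 + lam2 * y0) * (a0 - y0) + mu / 2 * ((a0 - y0) * (a0 - y0))) =
    (lam1 * Rabs a0 - lam1 * (Rsgn y0 * a0)) + lam1 * (Rsgn y0 * y0 - Rabs y0) + (lam2 - mu)/2 * ((a0 - y0) * (a0 - y0)))
    by field.
  rewrite E1 in E. lra. Qed.

Lemma bg_subgrad p lam1 lam2 lam3 mu (y a : bstate) : 0 <= lam1 -> mu <= lam2 -> mu <= lam3 ->
  let s := (lam3 * fst y, fun j => lam1 * Rsgn (snd y j) + lam2 * snd y j) in
  g_bin p lam1 lam2 lam3 y + bip p s (bsub a y) + mu / 2 * bip p (bsub a y) (bsub a y) <= g_bin p lam1 lam2 lam3 a.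
Proof.
  intros H1 H2 H3 s.
  assert (Hw : 0 <= sumn p (fun j => (lam1 * Rabs (snd a j) + lam2 / 2 * (snd a j * snd a j)) -
     ((lam1 * Rabs (snd y j) + lam2 / 2 * (snd y j * snd y j)) +
      (lam1 * Rsgn (snd y j) + lam2 * snd y j) * (snd a j - snd y j)
      + mu / 2 * ((snd a j - snd y j) * (snd a j - snd y j))))).
  { apply sumn_nonneg. intros j _. pose proof (coord_sg lam1 lam2 mu (snd y j) (snd a j) H1 H2). lra. }
  repeat rewrite ?sumn_sub, ?sumn_add, ?sumn_scal in Hw.
  assert (Hb : lam3 / 2 * fst y ^ 2 + lam3 * fst y * (fst a - fst y) + mu / 2 * ((fst a - fst y) * (fst a - fst y))
     <= lam3 / 2 * fst a ^ 2).
  { assert (0 <= (lam3 - mu)/2 * ((fst a - fst y) * (fst a - fst y))) by (apply Rmult_le_pos; [lra| exact (Rle_0_sqr _)]).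
    assert (E : lam3 / 2 * fst a ^ 2 - (lam3 / 2 * fst y ^ 2 + lam3 * fst y * (fst a - fst y) + mu / 2 * ((fst a - fst y) * (fst a - fst y)))
       = (lam3 - mu)/2 * ((fst a - fst y) * (fst a - fst y))) by field. lra. }
  unfold s, bip, g_bin, norm1, dot, bsub; simpl. lra.
Qed.

Lemma bF_nonneg n p delta x y lam1 lam2 lam3 a : (1 <= n)%nat -> 0 < delta -> 0 <= lam1 -> 0 < lam2 -> 0 < lam3 ->
  0 <= F_bin n p delta x y lam1 lam2 lam3 a.
Proof.
  intros Hn Hd H1 H2 H3. unfold F_bin, f_bin, g_bin.
  assert (0 <= sumn n (fun i => phiH delta (y i * (fst a + dot p (x i) (snd a)))))
    by (apply sumn_nonneg; intros; apply phiH_nonneg; auto).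
  assert (0 <= norm1 p (snd a)) by (apply sumn_nonneg; intros; apply Rabs_pos).
  assert (0 <= dot p (snd a) (snd a)) by (apply sumn_nonneg; intros; exact (Rle_0_sqr _)).
  pose proof (inv_n_pos n Hn). assert (0 <= fst a ^ 2) by (apply pow2_ge_0).
  assert (0 <= / INR n * sumn n (fun i => phiH delta (y i * (fst a + dot p (x i) (snd a))))) by (apply Rmult_le_pos; lra).
  assert (0 <= lam1 * norm1 p (snd a)) by (apply Rmult_le_pos; lra).
  assert (0 <= lam2 / 2 * dot p (snd a) (snd a)) by (apply Rmult_le_pos; lra).
  assert (0 <= lam3 / 2 * fst a ^ 2) by (apply Rmult_le_pos; lra).
  lra.
Qed.

Lemma bcompl p : forall (v : nat -> bstate) C tau, 0 <= C -> 0 <= tau < 1 -> (forall k : nat, True) ->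
  (forall k m, (k <= m)%nat -> bip p (bsub (v k) (v m)) (bsub (v k) (v m)) <= C * tau ^ k) ->
  exists us M, True /\ 0 <= M /\ forall k, bip p (bsub (v k) us) (bsub (v k) us) <= M * C * tau ^ k.
Proof.
  intros v C tau HC Ht _ Hv.
  assert (Hnn : forall k m, 0 <= sumn p (fun j => (snd (v k) j - snd (v m) j) * (snd (v k) j - snd (v m) j)))
    by (intros; apply sumn_nonneg; intros; exact (Rle_0_sqr _)).
  assert (Hb : forall k m, (k <= m)%nat -> (fst (v k) - fst (v m)) * (fst (v k) - fst (v m)) <= C * tau ^ k).
  { intros k m Hkm. specialize (Hv k m Hkm). specialize (Hnn k m). unfold bip, bsub, dot in Hv; simpl in Hv. lra. }
  set (w := fun j k => if Nat.ltb j p then snd (v k) j else 0).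
  assert (Hw : forall j k m, (k <= m)%nat -> (w j k - w j m) * (w j k - w j m) <= C * tau ^ k).
  { intros j k m Hkm. unfold w. destruct (Nat.ltb_spec j p).
    - specialize (Hv k m Hkm). unfold bip, bsub, dot in Hv; simpl in Hv.
      pose proof (sumn_term_le p (fun j => (snd (v k) j - snd (v m) j) * (snd (v k) j - snd (v m) j)) j
        ltac:(intros; exact (Rle_0_sqr _)) H). simpl in H0.
      pose proof (Rle_0_sqr (fst (v k) - fst (v m))). unfold Rsqr in H1. lra.
    - replace ((0 - 0) * (0 - 0)) with 0 by ring. apply Rmult_le_pos; auto. apply pow_le; lra. }
  destruct (coord_lim (fun k => fst (v k)) C tau HC Ht Hb) as [lb Hlb].
  set (lw := fun j => proj1_sig (coord_lim (w j) C tau HC Ht (Hw j))).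
  assert (Hlw : forall j k, (w j k - lw j) * (w j k - lw j) <= C * tau ^ k)
    by (intros; unfold lw; destruct (coord_lim (w j) C tau HC Ht (Hw j)) as [l Hl]; simpl; apply Hl).
  exists (lb, lw), (1 + INR p). split; auto. split. pose proof (pos_INR p); lra.
  intros k. unfold bip, bsub, dot; simpl.
  assert (sumn p (fun j => (snd (v k) j - lw j) * (snd (v k) j - lw j)) <= sumn p (fun _ => C * tau ^ k)).
  { apply sumn_le. intros j Hj. specialize (Hlw j k). unfold w in Hlw.
    destruct (Nat.ltb_spec j p); [exact Hlw| lia]. }
  rewrite sumn_const in H. specialize (Hlb k). nra.
Qed.

Lemma binary_case : forall (n p : nat) (x : nat -> vec) (y : nat -> R)
          (lam1 lam2 lam3 delta eta : R)
          (u : nat -> bstate) (L om : nat -> R),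
     (1 <= n)%nat ->
     (forall i, (i < n)%nat -> y i = 1 \/ y i = -1) ->
     0 <= lam1 -> 0 < lam2 -> 0 < lam3 -> 0 < delta -> 1 < eta ->
     0 < L 0%nat -> L 0%nat <= Lf_bin n p delta x y ->
     (forall k : nat,
        pgh_step bsub badd bscal (bip p) (f_bin n p delta x y)
          (grad_bin n p delta x y) (F_bin n p delta x y lam1 lam2 lam3)
          (prox_bin n p delta x y lam1 lam2 lam3) eta (Lf_bin n p delta x y)
          (L k) (u (Nat.pred k)) (u k) (om k) (L (S k)) (u (S k))) ->
     Rlinear_to_unique_min bsub (bip p) (F_bin n p delta x y lam1 lam2 lam3)
       (fun _ => True) u.
Proof.
  intros n p x y lam1 lam2 lam3 delta eta u L om Hn _ H1 H2 H3 Hd He HL0 HLm Hst.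
  pose proof (Rmin_l lam2 lam3). pose proof (Rmin_r lam2 lam3).
  assert (Hmu : 0 < Rmin lam2 lam3) by (apply Rmin_glb_lt; auto).
  apply (main_generic bsub badd bscal (bip p) (f_bin n p delta x y) (g_bin p lam1 lam2 lam3)
     (F_bin n p delta x y lam1 lam2 lam3) (grad_bin n p delta x y) (prox_bin n p delta x y lam1 lam2 lam3)
     (fun _ => True) (Rmin lam2 lam3) eta (Lf_bin n p delta x y) u L om); auto.
  - apply bgram.
  - intros; apply bF_nonneg; auto.
  - intros; apply bconv; auto.
  - intros Lk h z HLk Hpr. split; auto. intros a _. unfold prox_bin in Hpr.
    apply bprox; auto; rewrite Hpr; reflexivity.
  - intros y0 _. eexists. intros a _. apply (bg_subgrad p lam1 lam2 lam3 (Rmin lam2 lam3) y0 a); auto.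
  - apply bcompl.
Qed.


Lemma sumn2_add p J (f g : nat -> nat -> R) :
  sumn p (fun l => sumn J (fun j => f l j + g l j)) = sumn p (fun l => sumn J (fun j => f l j)) + sumn p (fun l => sumn J (fun j => g l j)).
Proof. rewrite <- sumn_add. apply sumn_ext; intros. apply sumn_add. Qed.
Lemma sumn2_sub p J (f g : nat -> nat -> R) :
  sumn p (fun l => sumn J (fun j => f l j - g l j)) = sumn p (fun l => sumn J (fun j => f l j)) - sumn p (fun l => sumn J (fun j => g l j)).
Proof. rewrite <- sumn_sub. apply sumn_ext; intros. apply sumn_sub. Qed.
Lemma sumn2_scal p J c (f : nat -> nat -> R) :
  sumn p (fun l => sumn J (fun j => c * f l j)) = c * sumn p (fun l => sumn J (fun j => f l j)).
Proof. rewrite <- sumn_scal. apply sumn_ext; intros. apply sumn_scal. Qed.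

Lemma mgram p J : gram msub madd mscal (mip p J).
Proof.
  unfold gram, mip, msub, madd, mscal, dot; simpl. repeat split.
  - intros. rewrite (sumn_ext J (fun j => (fst a j - fst b j) * fst c j) (fun j => fst a j * fst c j - fst b j * fst c j)) by (intros; ring).
    rewrite (sumn_ext p (fun l => sumn J (fun j => (snd a l j - snd b l j) * snd c l j))
       (fun l => sumn J (fun j => snd a l j * snd c l j - snd b l j * snd c l j))) by (intros; apply sumn_ext; intros; ring).
    rewrite sumn_sub, sumn2_sub. ring.
  - intros. rewrite (sumn_ext J (fun j => (fst a j + fst b j) * fst c j) (fun j => fst a j * fst c j + fst b j * fst c j)) by (intros; ring).
    rewrite (sumn_ext p (fun l => sumn J (fun j => (snd a l j + snd b l j) * snd c l j))
       (fun l => sumn J (fun j => snd a l j * snd c l j + snd b l j * snd c l j))) by (intros; apply sumn_ext; intros; ring).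
    rewrite sumn_add, sumn2_add. ring.
  - intros. rewrite (sumn_ext J (fun j => (t * fst a j) * fst c j) (fun j => t * (fst a j * fst c j))) by (intros; ring).
    rewrite (sumn_ext p (fun l => sumn J (fun j => (t * snd a l j) * snd c l j))
       (fun l => sumn J (fun j => t * (snd a l j * snd c l j)))) by (intros; apply sumn_ext; intros; ring).
    rewrite sumn_scal, sumn2_scal. ring.
  - intros. rewrite (sumn_ext J (fun j => fst a j * fst b j) (fun j => fst b j * fst a j)) by (intros; ring).
    rewrite (sumn_ext p (fun l => sumn J (fun j => snd a l j * snd b l j))
       (fun l => sumn J (fun j => snd b l j * snd a l j))) by (intros; apply sumn_ext; intros; ring). ring.
  - intros. assert (0 <= sumn J (fun j => fst a j * fst a j)) by (apply sumn_nonneg; intros; exact (Rle_0_sqr _)).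
    assert (0 <= sumn p (fun l => sumn J (fun j => snd a l j * snd a l j))) by
      (apply sumn_nonneg; intros; apply sumn_nonneg; intros; exact (Rle_0_sqr _)). lra.
Qed.

Lemma aux_mgrad n p J (T : nat -> nat -> R) (x : nat -> vec) (db : vec) (dW : mat) :
  sumn J (fun j => / INR n * sumn n (fun i => T i j) * db j) +
  sumn p (fun l => sumn J (fun j => / INR n * sumn n (fun i => T i j * x i l) * dW l j))
  = / INR n * sumn n (fun i => sumn J (fun j => T i j * (db j + sumn p (fun l => x i l * dW l j)))).
Proof.
  rewrite (sumn_ext J _ (fun j => / INR n * sumn n (fun i => T i j * db j)))
    by (intros; rewrite Rmult_assoc, sumn_mulr; reflexivity).
  rewrite sumn_scal, <- (sumn_swap n J (fun i j => T i j * db j)).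
  rewrite (sumn_ext p _ (fun l => / INR n * sumn J (fun j => sumn n (fun i => T i j * x i l * dW l j))))
    by (intros; rewrite <- sumn_scal; apply sumn_ext; intros; rewrite Rmult_assoc, sumn_mulr; reflexivity).
  rewrite sumn_scal.
  rewrite (sumn_ext p _ (fun l => sumn n (fun i => sumn J (fun j => T i j * x i l * dW l j))))
    by (intros l _; symmetry; apply (sumn_swap n J (fun i j => T i j * x i l * dW l j))).
  rewrite <- (sumn_swap n p (fun i l => sumn J (fun j => T i j * x i l * dW l j))).
  rewrite (sumn_ext n (fun i => sumn p (fun l => sumn J (fun j => T i j * x i l * dW l j)))
     (fun i => sumn J (fun j => sumn p (fun l => T i j * x i l * dW l j))))
     by (intros i _; apply (sumn_swap p J (fun l j => T i j * x i l * dW l j))).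
  rewrite (sumn_ext n (fun i => sumn J (fun j => T i j * (db j + sumn p (fun l => x i l * dW l j))))
     (fun i => sumn J (fun j => T i j * db j + sumn p (fun l => T i j * x i l * dW l j)))).
  2:{ intros i _. apply sumn_ext. intros j _.
      rewrite (sumn_ext p (fun l => T i j * x i l * dW l j) (fun l => T i j * (x i l * dW l j))) by (intros; ring).
      rewrite sumn_scal. ring. }
  rewrite sumn2_add. ring.
Qed.

Lemma mgrad_ip n p J delta x y h d :
  mip p J (grad_M n p J delta x y h) d =
  / INR n * sumn n (fun i => sumn J (fun j => aij y i j * dphiH delta (mscore p x h i j) *
                             (fst d j + sumn p (fun l => x i l * snd d l j)))).
Proof.
  unfold mip, grad_M, dot; simpl.
  exact (aux_mgrad n p J (fun i j => aij y i j * dphiH delta (mscore p x h i j)) x (fst d) (snd d)).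
Qed.

Lemma aij_nonneg y i j : 0 <= aij y i j.
Proof. unfold aij. destruct (Nat.eqb (y i) j); lra. Qed.

Lemma mconv n p J delta x y a h : (1 <= n)%nat -> 0 < delta ->
  ellM n p J delta x y h + mip p J (grad_M n p J delta x y h) (msub a h) <= ellM n p J delta x y a.
Proof.
  intros Hn Hd. rewrite mgrad_ip. unfold ellM. rewrite <- Rmult_plus_distr_l, <- sumn_add.
  apply Rmult_le_compat_l. apply Rlt_le, inv_n_pos; auto.
  apply sumn_le. intros i _. rewrite <- sumn_add. apply sumn_le. intros j _. simpl.

  replace (sumn p (fun l => x i l * (snd a l j - snd h l j))) with
    (sumn p (fun l => x i l * snd a l j) - sumn p (fun l => x i l * snd h l j))
    by (rewrite <- sumn_sub; apply sumn_ext; intros; ring).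
  pose proof (phiH_sub delta (mscore p x a i j) (mscore p x h i j) Hd).
  pose proof (aij_nonneg y i j).
  unfold mscore in *.
  replace (fst a j - fst h j + (sumn p (fun l => x i l * snd a l j) - sumn p (fun l => x i l * snd h l j)))
    with ((fst a j + sumn p (fun l => x i l * snd a l j)) - (fst h j + sumn p (fun l => x i l * snd h l j))) by ring.
  set (ma := fst a j + sumn p (fun l => x i l * snd a l j)) in *.
  set (mh := fst h j + sumn p (fun l => x i l * snd h l j)) in *.
  nra.
Qed.


Lemma inU_seg p J z a t : inU p J z -> inU p J a -> inU p J (madd z (mscal t (msub a z))).
Proof.
  intros [Hz1 Hz2] [Ha1 Ha2]. unfold inU, madd, mscal, msub; simpl. split.
  - intros l Hl. rewrite sumn_add, sumn_scal, sumn_sub, Hz1, Ha1 by auto. ring.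
  - rewrite sumn_add, sumn_scal, sumn_sub, Hz2, Ha2. ring.
Qed.

Lemma inU_mid p J a b : inU p J a -> inU p J b -> inU p J (mscal (/2) (madd a b)).
Proof.
  intros [Hz1 Hz2] [Ha1 Ha2]. unfold inU, madd, mscal; simpl. split.
  - intros l Hl. rewrite sumn_scal, sumn_add, Hz1, Ha1 by auto. ring.
  - rewrite sumn_scal, sumn_add, Hz2, Ha2. ring.
Qed.

Lemma mg_subgrad p J lam1 lam2 lam3 mu (y a : mstate) : 0 <= lam1 -> mu <= lam2 -> mu <= lam3 ->
  let s := (fun j => lam3 * fst y j, fun l j => lam1 * Rsgn (snd y l j) + lam2 * snd y l j) in
  GM p J lam1 lam2 lam3 y + mip p J s (msub a y) + mu / 2 * mip p J (msub a y) (msub a y) <= GM p J lam1 lam2 lam3 a.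
Proof.
  intros H1 H2 H3 s.
  assert (Hw : 0 <= sumn p (fun l => sumn J (fun j => (lam1 * Rabs (snd a l j) + lam2 / 2 * (snd a l j ^ 2)) -
     ((lam1 * Rabs (snd y l j) + lam2 / 2 * (snd y l j ^ 2)) +
      (lam1 * Rsgn (snd y l j) + lam2 * snd y l j) * (snd a l j - snd y l j)
      + mu / 2 * ((snd a l j - snd y l j) * (snd a l j - snd y l j)))))).
  { apply sumn_nonneg. intros l _. apply sumn_nonneg. intros j _.
    pose proof (coord_sg lam1 lam2 mu (snd y l j) (snd a l j) H1 H2). simpl. lra. }
  repeat rewrite ?sumn2_sub, ?sumn2_add, ?sumn2_scal in Hw.
  assert (Hb : 0 <= sumn J (fun j => lam3 / 2 * (fst a j * fst a j) - (lam3 / 2 * (fst y j * fst y j)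
      + lam3 * fst y j * (fst a j - fst y j) + mu / 2 * ((fst a j - fst y j) * (fst a j - fst y j))))).
  { apply sumn_nonneg. intros j _.
    assert (0 <= (lam3 - mu)/2 * ((fst a j - fst y j) * (fst a j - fst y j))) by (apply Rmult_le_pos; [lra| exact (Rle_0_sqr _)]).
    assert (E : lam3 / 2 * (fst a j * fst a j) - (lam3 / 2 * (fst y j * fst y j)
      + lam3 * fst y j * (fst a j - fst y j) + mu / 2 * ((fst a j - fst y j) * (fst a j - fst y j)))
       = (lam3 - mu)/2 * ((fst a j - fst y j) * (fst a j - fst y j))) by field. lra. }
  repeat rewrite ?sumn_sub, ?sumn_add, ?sumn_scal in Hb.
  unfold s, mip, GM, dot, msub; cbn [fst snd]. lra.
Qed.

Lemma mF_nonneg n p J delta x y lam1 lam2 lam3 a : (1 <= n)%nat -> 0 < delta -> 0 <= lam1 -> 0 < lam2 -> 0 < lam3 ->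
  0 <= FM n p J delta x y lam1 lam2 lam3 a.
Proof.
  intros Hn Hd H1 H2 H3. unfold FM, ellM, GM.
  assert (0 <= sumn n (fun i => sumn J (fun j => aij y i j * phiH delta (mscore p x a i j))))
    by (apply sumn_nonneg; intros; apply sumn_nonneg; intros; apply Rmult_le_pos; [apply aij_nonneg| apply phiH_nonneg; auto]).
  assert (0 <= sumn p (fun l => sumn J (fun j => Rabs (snd a l j))))
    by (apply sumn_nonneg; intros; apply sumn_nonneg; intros; apply Rabs_pos).
  assert (0 <= sumn p (fun l => sumn J (fun j => snd a l j ^ 2)))
    by (apply sumn_nonneg; intros; apply sumn_nonneg; intros; apply pow2_ge_0).
  assert (0 <= dot J (fst a) (fst a)) by (apply sumn_nonneg; intros; exact (Rle_0_sqr _)).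
  pose proof (inv_n_pos n Hn).
  assert (0 <= / INR n * sumn n (fun i => sumn J (fun j => aij y i j * phiH delta (mscore p x a i j)))) by (apply Rmult_le_pos; lra).
  assert (0 <= lam1 * sumn p (fun l => sumn J (fun j => Rabs (snd a l j)))) by (apply Rmult_le_pos; lra).
  assert (0 <= lam2 / 2 * sumn p (fun l => sumn J (fun j => snd a l j ^ 2))) by (apply Rmult_le_pos; lra).
  assert (0 <= lam3 / 2 * dot J (fst a) (fst a)) by (apply Rmult_le_pos; lra).
  lra.
Qed.

Lemma GM_seg p J lam1 lam2 lam3 mu (z a : mstate) t : 0 <= lam1 -> mu <= lam2 -> mu <= lam3 -> 0 <= t <= 1 ->
  GM p J lam1 lam2 lam3 (madd z (mscal t (msub a z))) + mu / 2 * (t * (1 - t)) * mip p J (msub a z) (msub a z)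
  <= (1 - t) * GM p J lam1 lam2 lam3 z + t * GM p J lam1 lam2 lam3 a.
Proof.
  intros H1 H2 H3 Ht. unfold GM, mip, dot, madd, mscal, msub; cbn [fst snd].
  set (A1 := fun (V : mat) => sumn p (fun l => sumn J (fun j => Rabs (V l j)))).
  assert (HA1 : sumn p (fun l => sumn J (fun j => Rabs (snd z l j + t * (snd a l j - snd z l j))))
     <= (1 - t) * sumn p (fun l => sumn J (fun j => Rabs (snd z l j))) + t * sumn p (fun l => sumn J (fun j => Rabs (snd a l j)))).
  { rewrite <- !sumn2_scal, <- sumn2_add. apply sumn_le; intros l _; apply sumn_le; intros j _.
    replace (snd z l j + t * (snd a l j - snd z l j)) with ((1 - t) * snd z l j + t * snd a l j) by ring.
    eapply Rle_trans. apply Rabs_triang. rewrite !Rabs_mult, (Rabs_pos_eq t), (Rabs_pos_eq (1 - t)) by lra. lra. }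
  assert (HA2 : sumn p (fun l => sumn J (fun j => (snd z l j + t * (snd a l j - snd z l j)) ^ 2))
     = (1 - t) * sumn p (fun l => sumn J (fun j => snd z l j ^ 2)) + t * sumn p (fun l => sumn J (fun j => snd a l j ^ 2))
       - t * (1 - t) * sumn p (fun l => sumn J (fun j => (snd a l j - snd z l j) * (snd a l j - snd z l j)))).
  { rewrite <- !sumn2_scal, <- sumn2_add, <- sumn2_sub. apply sumn_ext; intros l _; apply sumn_ext; intros j _. ring. }
  assert (HA3 : sumn J (fun j => (fst z j + t * (fst a j - fst z j)) * (fst z j + t * (fst a j - fst z j)))
     = (1 - t) * sumn J (fun j => fst z j * fst z j) + t * sumn J (fun j => fst a j * fst a j)
       - t * (1 - t) * sumn J (fun j => (fst a j - fst z j) * (fst a j - fst z j))).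
  { rewrite <- !sumn_scal, <- sumn_add, <- sumn_sub. apply sumn_ext; intros j _. ring. }
  rewrite HA2, HA3.
  set (S1z := sumn p (fun l => sumn J (fun j => Rabs (snd z l j)))) in *.
  set (S1a := sumn p (fun l => sumn J (fun j => Rabs (snd a l j)))) in *.
  set (S1t := sumn p (fun l => sumn J (fun j => Rabs (snd z l j + t * (snd a l j - snd z l j))))) in *.
  set (NW := sumn p (fun l => sumn J (fun j => (snd a l j - snd z l j) * (snd a l j - snd z l j)))).
  set (Nb := sumn J (fun j => (fst a j - fst z j) * (fst a j - fst z j))).
  assert (HNW : 0 <= NW) by (apply sumn_nonneg; intros; apply sumn_nonneg; intros; exact (Rle_0_sqr _)).
  assert (HNb : 0 <= Nb) by (apply sumn_nonneg; intros; exact (Rle_0_sqr _)).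
  assert (Htau : 0 <= t * (1 - t)) by nra.
  assert (lam1 * S1t <= lam1 * ((1 - t) * S1z + t * S1a)) by (apply Rmult_le_compat_l; auto).
  assert (mu / 2 * (t * (1 - t)) * NW <= lam2 / 2 * (t * (1 - t)) * NW)
    by (apply Rmult_le_compat_r; auto; apply Rmult_le_compat_r; lra).
  assert (mu / 2 * (t * (1 - t)) * Nb <= lam3 / 2 * (t * (1 - t)) * Nb)
    by (apply Rmult_le_compat_r; auto; apply Rmult_le_compat_r; lra).
  lra.
Qed.


Lemma mprox n p J delta x y lam1 lam2 lam3 mu Lk h z : 0 < Lk -> 0 <= lam1 -> mu <= lam2 -> mu <= lam3 -> 0 < mu ->
  prox_M n p J delta x y lam1 lam2 lam3 Lk h z -> inU p J z /\ forall a, inU p J a ->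
   mip p J (grad_M n p J delta x y h) (msub z h) + Lk/2 * mip p J (msub z h) (msub z h) + GM p J lam1 lam2 lam3 z
   + (Lk+mu)/2 * mip p J (msub a z) (msub a z)
   <= mip p J (grad_M n p J delta x y h) (msub a h) + Lk/2 * mip p J (msub a h) (msub a h) + GM p J lam1 lam2 lam3 a.
Proof.
  intros HL H1 H2 H3 Hmu Hpr. unfold prox_M in Hpr. cbv zeta beta in Hpr. destruct Hpr as [Hz Hmin].
  split; auto. intros a Ha.
  set (gr := grad_M n p J delta x y h) in *.
  set (Qz := mip p J gr (msub z h) + Lk/2 * mip p J (msub z h) (msub z h) + GM p J lam1 lam2 lam3 z) in *.
  set (Qa := mip p J gr (msub a h) + Lk/2 * mip p J (msub a h) (msub a h) + GM p J lam1 lam2 lam3 a).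
  set (N := mip p J (msub a z) (msub a z)).
  assert (HN : 0 <= N) by (destruct (mgram p J) as (_&_&_&_&Hn); apply Hn).
  assert (Key : forall t, 0 < t < 1 -> (Lk + mu) / 2 * (1 - t) * N <= Qa - Qz).
  { intros t Ht.
    pose proof (Hmin _ (inU_seg p J z a t Hz Ha)) as Hm.
    destruct (G_seg msub madd mscal (mip p J) (mgram p J) gr h z a t) as [E1 E2]. simpl in E1, E2.
    rewrite E1, E2 in Hm.
    pose proof (GM_seg p J lam1 lam2 lam3 mu z a t H1 H2 H3 ltac:(lra)) as Hg. fold N in Hg, Hm.
    assert (Hq : Qz <= (1 - t) * Qz + t * Qa - (Lk + mu) / 2 * (t * (1 - t)) * N).
    { apply Rle_trans with ((1 - t) * mip p J gr (msub z h) + t * mip p J gr (msub a h) +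
       Lk / 2 * ((1 - t) * mip p J (msub z h) (msub z h) + t * mip p J (msub a h) (msub a h) - t * (1 - t) * N) +
       ((1 - t) * GM p J lam1 lam2 lam3 z + t * GM p J lam1 lam2 lam3 a - mu / 2 * (t * (1 - t)) * N)).
      lra. right. unfold Qz, Qa. field. }
    assert (Hq2 : 0 <= t * (Qa - Qz - (Lk + mu) / 2 * (1 - t) * N)).
    { replace (t * (Qa - Qz - (Lk + mu) / 2 * (1 - t) * N)) with
        (((1 - t) * Qz + t * Qa - (Lk + mu) / 2 * (t * (1 - t)) * N) - Qz) by ring. lra. }
    assert (0 <= Qa - Qz - (Lk + mu) / 2 * (1 - t) * N).
    { apply Rmult_le_reg_l with t. lra. rewrite Rmult_0_r. exact Hq2. }
    lra. }
  assert (Hfin : (Lk + mu) / 2 * N - (Qa - Qz) <= 0).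
  { apply le_eps. intros eps Heps. set (c := (Lk + mu) / 2 * N).
    assert (Hc : 0 <= c) by (unfold c; apply Rmult_le_pos; lra).
    set (t := Rmin (1/2) (eps / (c + 1))).
    assert (Ht1 : 0 < t) by (unfold t; apply Rmin_glb_lt; [lra| apply Rdiv_lt_0_compat; lra]).
    assert (Ht2 : t <= 1/2) by apply Rmin_l.
    assert (Ht3 : t <= eps / (c + 1)) by apply Rmin_r.
    specialize (Key t ltac:(lra)).
    assert (c * t <= eps).
    { apply Rle_trans with (c * (eps / (c + 1))). apply Rmult_le_compat_l; auto.
      apply Rmult_le_reg_r with (c + 1). lra. replace (c * (eps / (c + 1)) * (c + 1)) with (c * eps) by (field; lra). nra. }
    unfold c in *. nra. }
  unfold Qa, Qz, N in *. lra.
Qed.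


Lemma zero_small X K s : 0 <= s < 1 -> (forall k, Rabs X <= K * s ^ k) -> X = 0.
Proof.
  intros Hs HX. assert (Rabs X <= 0).
  { apply le_eps. intros eps Heps. destruct (pow_small s K eps Hs Heps) as [k Hk]. specialize (HX k). lra. }
  pose proof (Rabs_pos X). assert (Rabs X = 0) by lra. destruct (Rcase_abs X); [rewrite Rabs_left in H1 | rewrite Rabs_pos_eq in H1]; lra.
Qed.

Lemma sum_zero_lim J (lim : nat -> R) (sq : nat -> nat -> R) C tau : 0 <= C -> 0 <= tau < 1 ->
  (forall k, sumn J (sq k) = 0) -> (forall k j, (j < J)%nat -> (sq k j - lim j) * (sq k j - lim j) <= C * tau ^ k) ->
  sumn J lim = 0.
Proof.
  intros HC Ht Hs Hb. apply (zero_small _ (INR J * sqrt C) (sqrt tau)).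
  { split. apply sqrt_pos. rewrite <- sqrt_1. apply sqrt_lt_1_alt; lra. }
  intros k.
  replace (sumn J lim) with (- sumn J (fun j => sq k j - lim j)) by (rewrite sumn_sub, Hs; ring).
  rewrite Rabs_Ropp. eapply Rle_trans. apply sumn_abs.
  eapply Rle_trans. apply (sumn_le J _ (fun _ => sqrt C * sqrt tau ^ k)).
  { intros j Hj. rewrite <- sqrt_pow_eq by lra. rewrite <- sqrt_mult_alt by lra. apply abs_le_sqrt. auto. }
  rewrite sumn_const. lra.
Qed.

Lemma mcompl p J : forall (v : nat -> mstate) C tau, 0 <= C -> 0 <= tau < 1 -> (forall k, inU p J (v k)) ->
  (forall k m, (k <= m)%nat -> mip p J (msub (v k) (v m)) (msub (v k) (v m)) <= C * tau ^ k) ->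
  exists us M, inU p J us /\ 0 <= M /\ forall k, mip p J (msub (v k) us) (msub (v k) us) <= M * C * tau ^ k.
Proof.
  intros v C tau HC Ht HU Hv.
  assert (HB : forall k m, 0 <= sumn J (fun j => (fst (v k) j - fst (v m) j) * (fst (v k) j - fst (v m) j)))
    by (intros; apply sumn_nonneg; intros; exact (Rle_0_sqr _)).
  assert (HWi : forall k m l, 0 <= sumn J (fun j => (snd (v k) l j - snd (v m) l j) * (snd (v k) l j - snd (v m) l j)))
    by (intros; apply sumn_nonneg; intros; exact (Rle_0_sqr _)).
  assert (HW : forall k m, 0 <= sumn p (fun l => sumn J (fun j => (snd (v k) l j - snd (v m) l j) * (snd (v k) l j - snd (v m) l j))))
    by (intros; apply sumn_nonneg; intros; apply HWi).
  assert (Hv' : forall k m, (k <= m)%nat ->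
     sumn J (fun j => (fst (v k) j - fst (v m) j) * (fst (v k) j - fst (v m) j)) +
     sumn p (fun l => sumn J (fun j => (snd (v k) l j - snd (v m) l j) * (snd (v k) l j - snd (v m) l j))) <= C * tau ^ k).
  { intros k m Hkm. specialize (Hv k m Hkm). unfold mip, msub, dot in Hv; cbn [fst snd] in Hv. exact Hv. }
  assert (HCt : forall k, 0 <= C * tau ^ k) by (intros; apply Rmult_le_pos; auto; apply pow_le; lra).
  set (wb := fun j k => if Nat.ltb j J then fst (v k) j else 0).
  assert (Hwb : forall j k m, (k <= m)%nat -> (wb j k - wb j m) * (wb j k - wb j m) <= C * tau ^ k).
  { intros j k m Hkm. unfold wb. destruct (Nat.ltb_spec j J).
    - pose proof (sumn_term_le J (fun j => (fst (v k) j - fst (v m) j) * (fst (v k) j - fst (v m) j)) j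
        ltac:(intros; exact (Rle_0_sqr _)) H). simpl in H0.
      pose proof (Hv' k m Hkm). pose proof (HW k m). lra.
    - replace ((0 - 0) * (0 - 0)) with 0 by ring. auto. }
  set (wW := fun l j k => if andb (Nat.ltb l p) (Nat.ltb j J) then snd (v k) l j else 0).
  assert (HwW : forall l j k m, (k <= m)%nat -> (wW l j k - wW l j m) * (wW l j k - wW l j m) <= C * tau ^ k).
  { intros l j k m Hkm. unfold wW. destruct (Nat.ltb_spec l p); destruct (Nat.ltb_spec j J); simpl;
     try (replace ((0 - 0) * (0 - 0)) with 0 by ring; auto).
    pose proof (sumn_term_le J (fun j => (snd (v k) l j - snd (v m) l j) * (snd (v k) l j - snd (v m) l j)) j
        ltac:(intros; exact (Rle_0_sqr _)) H0). simpl in H1.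
    pose proof (sumn_term_le p (fun l => sumn J (fun j => (snd (v k) l j - snd (v m) l j) * (snd (v k) l j - snd (v m) l j))) l
        ltac:(intros; apply HWi) H). simpl in H2.
    pose proof (Hv' k m Hkm). pose proof (HB k m). lra. }
  set (lb := fun j => proj1_sig (coord_lim (wb j) C tau HC Ht (Hwb j))).
  assert (Hlb : forall j k, (wb j k - lb j) * (wb j k - lb j) <= C * tau ^ k)
    by (intros; unfold lb; destruct (coord_lim (wb j) C tau HC Ht (Hwb j)) as [l Hl]; simpl; apply Hl).
  set (lW := fun l j => proj1_sig (coord_lim (wW l j) C tau HC Ht (HwW l j))).
  assert (HlW : forall l j k, (wW l j k - lW l j) * (wW l j k - lW l j) <= C * tau ^ k)
    by (intros; unfold lW; destruct (coord_lim (wW l j) C tau HC Ht (HwW l j)) as [lim Hl]; simpl; apply Hl).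
  assert (Hlb' : forall j k, (j < J)%nat -> (fst (v k) j - lb j) * (fst (v k) j - lb j) <= C * tau ^ k).
  { intros j k Hj. specialize (Hlb j k). unfold wb in Hlb. destruct (Nat.ltb_spec j J); [exact Hlb| lia]. }
  assert (HlW' : forall l j k, (l < p)%nat -> (j < J)%nat -> (snd (v k) l j - lW l j) * (snd (v k) l j - lW l j) <= C * tau ^ k).
  { intros l j k Hl Hj. specialize (HlW l j k). unfold wW in HlW.
    destruct (Nat.ltb_spec l p); destruct (Nat.ltb_spec j J); simpl in HlW; [exact HlW| lia | lia | lia]. }
  exists (lb, lW), (INR J + INR p * INR J). split; [|split].
  - split.
    + intros l Hl. simpl. apply (sum_zero_lim J (lW l) (fun k j => snd (v k) l j) C tau HC Ht).
      intros k. destruct (HU k) as [H1 _]. apply H1; auto.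
      intros k j Hj. apply HlW'; auto.
    + simpl. apply (sum_zero_lim J lb (fun k j => fst (v k) j) C tau HC Ht).
      intros k. destruct (HU k) as [_ H2]. apply H2.
      intros k j Hj. apply Hlb'; auto.
  - pose proof (pos_INR J). pose proof (pos_INR p). nra.
  - intros k. unfold mip, msub, dot; cbn [fst snd].
    assert (sumn J (fun j => (fst (v k) j - lb j) * (fst (v k) j - lb j)) <= sumn J (fun _ => C * tau ^ k))
      by (apply sumn_le; intros; apply Hlb'; auto).
    assert (sumn p (fun l => sumn J (fun j => (snd (v k) l j - lW l j) * (snd (v k) l j - lW l j)))
      <= sumn p (fun _ => sumn J (fun _ => C * tau ^ k))).
    { apply sumn_le; intros l Hl. apply sumn_le; intros j Hj. apply HlW'; auto. }
    rewrite sumn_const in H, H0. rewrite sumn_const in H0. lra.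
Qed.


Lemma multi_case : forall (n p J : nat) (x : nat -> vec) (y : nat -> nat)
          (lam1 lam2 lam3 delta eta : R)
          (U : nat -> mstate) (L om : nat -> R),
     (1 <= n)%nat ->
     (forall i, (i < n)%nat -> (y i < J)%nat) ->
     0 <= lam1 -> 0 < lam2 -> 0 < lam3 -> 0 < delta -> 1 < eta ->
     0 < L 0%nat -> L 0%nat <= Lm n p J delta x ->
     inU p J (U 0%nat) ->
     (forall k : nat,
        pgh_step msub madd mscal (mip p J) (ellM n p J delta x y)
          (grad_M n p J delta x y) (FM n p J delta x y lam1 lam2 lam3)
          (prox_M n p J delta x y lam1 lam2 lam3) eta (Lm n p J delta x)
          (L k) (U (Nat.pred k)) (U k) (om k) (L (S k)) (U (S k))) ->
     Rlinear_to_unique_min msub (mip p J) (FM n p J delta x y lam1 lam2 lam3)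
       (inU p J) U.
Proof.
  intros n p J x y lam1 lam2 lam3 delta eta U L om Hn _ H1 H2 H3 Hd He HL0 HLm HU0 Hst.
  pose proof (Rmin_l lam2 lam3). pose proof (Rmin_r lam2 lam3).
  assert (Hmu : 0 < Rmin lam2 lam3) by (apply Rmin_glb_lt; auto).
  apply (main_generic msub madd mscal (mip p J) (ellM n p J delta x y) (GM p J lam1 lam2 lam3)
     (FM n p J delta x y lam1 lam2 lam3) (grad_M n p J delta x y) (prox_M n p J delta x y lam1 lam2 lam3)
     (inU p J) (Rmin lam2 lam3) eta (Lm n p J delta x) U L om); auto.
  - apply mgram.
  - intros; apply mF_nonneg; auto.
  - intros; apply mconv; auto.
  - intros Lk h z HLk Hpr. apply (mprox n p J delta x y lam1 lam2 lam3 (Rmin lam2 lam3) Lk h z); auto.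
  - intros y0 _. eexists. intros a _. apply (mg_subgrad p J lam1 lam2 lam3 (Rmin lam2 lam3) y0 a); auto.
  - intros; apply inU_mid; auto.
  - apply mcompl.
Qed.


Theorem corollary1 :
  (* binary case (B-PGH) *)
  (forall (n p : nat) (x : nat -> vec) (y : nat -> R)
          (lam1 lam2 lam3 delta eta : R)
          (u : nat -> bstate) (L om : nat -> R),
     (1 <= n)%nat ->
     (forall i, (i < n)%nat -> y i = 1 \/ y i = -1) ->
     0 <= lam1 -> 0 < lam2 -> 0 < lam3 -> 0 < delta -> 1 < eta ->
     0 < L 0%nat -> L 0%nat <= Lf_bin n p delta x y ->
     (forall k : nat,
        pgh_step bsub badd bscal (bip p) (f_bin n p delta x y)
          (grad_bin n p delta x y) (F_bin n p delta x y lam1 lam2 lam3)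
          (prox_bin n p delta x y lam1 lam2 lam3) eta (Lf_bin n p delta x y)
          (L k) (u (Nat.pred k)) (u k) (om k) (L (S k)) (u (S k))) ->
     Rlinear_to_unique_min bsub (bip p) (F_bin n p delta x y lam1 lam2 lam3)
       (fun _ => True) u)
  /\
  (* multi-class case (M-PGH) *)
  (forall (n p J : nat) (x : nat -> vec) (y : nat -> nat)
          (lam1 lam2 lam3 delta eta : R)
          (U : nat -> mstate) (L om : nat -> R),
     (1 <= n)%nat ->
     (forall i, (i < n)%nat -> (y i < J)%nat) ->
     0 <= lam1 -> 0 < lam2 -> 0 < lam3 -> 0 < delta -> 1 < eta ->
     0 < L 0%nat -> L 0%nat <= Lm n p J delta x ->
     inU p J (U 0%nat) ->
     (forall k : nat,
        pgh_step msub madd mscal (mip p J) (ellM n p J delta x y)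
          (grad_M n p J delta x y) (FM n p J delta x y lam1 lam2 lam3)
          (prox_M n p J delta x y lam1 lam2 lam3) eta (Lm n p J delta x)
          (L k) (U (Nat.pred k)) (U k) (om k) (L (S k)) (U (S k))) ->
     Rlinear_to_unique_min msub (mip p J) (FM n p J delta x y lam1 lam2 lam3)
       (inU p J) U).
Proof.
  split; [exact binary_case | exact multi_case].
Qed.
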